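(* Let $X=\ell_p$ for some $1\le p<\infty$, or $X=c_0$, considered as a Banach algebra under coordinatewise multiplication. Let $\mathcal A$ be a finitely invariant Furstenberg family and $\lambda\in\mathbb C$ with $|\lambda|>1$. Then $\lambda B$ admits an algebra of $\mathcal A$-hypercyclic vectors, except zero (i.e. there is a subalgebra $\mathcal B\ne\{0\}$ of $X$ all of whose non-zero elements are $\mathcal A$-hypercyclic for $\lambda B$), if and only if there exists a family $(A(l,m))_{l,m\ge1}$ of pairwise disjoint sets in $\mathcal A$ such that, for any $l,m,l',m'\ge1$ and any $n\in A(l,m)$, $n'\in A(l',m')$ with $n'>n$, we have $n'\ge n+l$ and $n'\frac{m}{m'}\ge n+l+l'$.
   Context: $\lambda B(x(1),x(2),x(3),\ldots)=(\lambda x(2),\lambda x(3),\ldots)$. A Furstenberg family is a non-empty family $\mathcal A$ of subsets of $\mathbb N_0$ with $\varnothing\notin\mathcal A$ and such that $A\in\mathcal A$, $A\subset B\subset\mathbb N_0$ imply $B\in\mathcal A$; it is finitely invariant if $A\in\mathcal A$ implies $A\setminus[0,N]\in\mathcal A$ for all $N\ge0$. A vector $x$ is $\mathcal A$-hypercyclic for an operator $T$ if for every non-empty open $U\subset X$, $\{n\ge0:T^nx\in U\}\in\mathcal A$. *)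

(* Defs.v *)
From Stdlib Require Import Reals.
From Coquelicot Require Import Coquelicot.
Open Scope R_scope.

Definition cseq := nat -> C.

Definition powp (a p : R) : R := if Req_EM_T a 0 then 0 else Rpower a p.

Inductive seqspace := Lp (p : R) | C0space.

Definition valid_space (X : seqspace) : Prop :=
  match X with Lp p => 1 <= p | C0space => True end.

Definition inX (X : seqspace) (x : cseq) : Prop :=
  match X with
  | Lp p => ex_series (fun n => powp (Cmod (x n)) p)
  | C0space => is_lim_seq (fun n => Cmod (x n)) 0
  end.

Definition normX (X : seqspace) (x : cseq) : R :=
  match X with
  | Lp p => powp (Series (fun n => powp (Cmod (x n)) p)) (1 / p)
  | C0space => real (Sup_seq (fun n => Cmod (x n)))
  end.

Definition csub (x y : cseq) : cseq := fun n => Cminus (x n) (y n).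

Definition openX (X : seqspace) (U : cseq -> Prop) : Prop :=
  (forall x, U x -> inX X x) /\
  forall x, U x -> exists eps, 0 < eps /\
    forall y, inX X y -> normX X (csub y x) < eps -> U y.

Definition czero : cseq := fun _ => RtoC 0.
Definition cadd (x y : cseq) : cseq := fun n => Cplus (x n) (y n).
Definition cscal (a : C) (x : cseq) : cseq := fun n => Cmult a (x n).
Definition cmul (x y : cseq) : cseq := fun n => Cmult (x n) (y n).

Definition subalgebra (X : seqspace) (B : cseq -> Prop) : Prop :=
  (forall x, B x -> inX X x) /\
  B czero /\
  (forall x y, B x -> B y -> B (cadd x y)) /\
  (forall a x, B x -> B (cscal a x)) /\
  (forall x y, B x -> B y -> B (cmul x y)).

Definition lamB (lam : C) (x : cseq) : cseq := fun n => Cmult lam (x (S n)).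

Definition furstenberg (A : (nat -> Prop) -> Prop) : Prop :=
  (exists S, A S) /\
  ~ A (fun _ => False) /\
  (forall S S', A S -> (forall n, S n -> S' n) -> A S').

Definition finitely_invariant (A : (nat -> Prop) -> Prop) : Prop :=
  forall S, A S -> forall N : nat, A (fun n => S n /\ (N < n)%nat).

Definition A_hypercyclic (X : seqspace) (A : (nat -> Prop) -> Prop)
  (T : cseq -> cseq) (x : cseq) : Prop :=
  forall U, openX X U -> (exists y, U y) ->
    A (fun n => U (Nat.iter n T x)).

(* Main.v *)
Require Import Defs.
From Stdlib Require Import Reals Lra Lia Psatz Classical FunctionalExtensionality List Wf_nat Cantor ClassicalEpsilon ZArith.
From Coquelicot Require Import Coquelicot.
Open Scope R_scope.

Lemma powp_nonneg a p : 0 <= powp a p.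
Proof. unfold powp. destruct (Req_EM_T a 0). lra. unfold Rpower. left; apply exp_pos. Qed.

Lemma powp_0 p : powp 0 p = 0.
Proof. unfold powp. destruct (Req_EM_T 0 0); lra. Qed.

Lemma powp_pos a p : 0 < a -> powp a p = Rpower a p.
Proof. intros H. unfold powp. destruct (Req_EM_T a 0); [lra|reflexivity]. Qed.

Lemma powp_gt0 a p : 0 < a -> 0 < powp a p.
Proof. intros H. rewrite powp_pos by lra. unfold Rpower. apply exp_pos. Qed.

Lemma powp_le a b p : 0 <= a <= b -> 0 <= p -> powp a p <= powp b p.
Proof.
  intros [H1 H2] Hp. destruct (Req_dec a 0) as [->|Ha].
  rewrite powp_0. apply powp_nonneg.
  rewrite !powp_pos by lra. apply Rle_Rpower_l; lra.
Qed.

Lemma powp_lt a b p : 0 <= a < b -> 0 < p -> powp a p < powp b p.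
Proof.
  intros [H1 H2] Hp. destruct (Req_dec a 0) as [->|Ha].
  rewrite powp_0. apply powp_gt0; lra.
  rewrite !powp_pos by lra. apply Rlt_Rpower_l; lra.
Qed.

Lemma powp_mult a b p : 0 <= a -> 0 <= b -> powp (a*b) p = powp a p * powp b p.
Proof.
  intros Ha Hb. destruct (Req_dec a 0) as [->|Ha'].
  rewrite Rmult_0_l, !powp_0; ring.
  destruct (Req_dec b 0) as [->|Hb'].
  rewrite Rmult_0_r, !powp_0; ring.
  rewrite !powp_pos by nra. rewrite Rpower_mult_distr by lra. reflexivity.
Qed.

Lemma powp_inv a p : 0 <= a -> 0 < p -> powp (powp a p) (1/p) = a.
Proof.
  intros Ha Hp. destruct (Req_dec a 0) as [->|Ha'].
  rewrite !powp_0; reflexivity.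
  rewrite (powp_pos a) by lra. rewrite powp_pos.
  rewrite Rpower_mult. replace (p * (1/p)) with 1 by (field; lra). apply Rpower_1; lra.
  unfold Rpower; apply exp_pos.
Qed.

Lemma powp_1 a : 0 <= a -> powp a 1 = a.
Proof. intros H. destruct (Req_dec a 0) as [->|Ha]. apply powp_0.
  rewrite powp_pos by lra. apply Rpower_1; lra. Qed.

Lemma powp_le_self a p : 0 <= a <= 1 -> 1 <= p -> powp a p <= a.
Proof.
  intros [H1 H2] Hp. destruct (Req_dec a 0) as [->|Ha]. rewrite powp_0; lra.
  rewrite powp_pos by lra. rewrite <- (Rpower_1 a) at 2 by lra.
  unfold Rpower.
  assert (ln a <= 0). { destruct (Req_dec a 1) as [->|]. rewrite ln_1; lra. left. rewrite <- ln_1. apply ln_increasing; lra. }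
  destruct (Rle_lt_or_eq_dec _ _ Hp) as [Hp'|<-]; [|lra].
  destruct (Req_dec (ln a) 0) as [E|E]. rewrite E. rewrite !Rmult_0_r. lra.
  left. apply exp_increasing. nra.
Qed.

Lemma powp_sum_le a b p : 0 <= a -> 0 <= b -> 0 <= p ->
  powp (a + b) p <= powp 2 p * (powp a p + powp b p).
Proof.
  intros Ha Hb Hp.
  assert (H: a + b <= 2 * Rmax a b) by (unfold Rmax; destruct (Rle_dec a b); lra).
  eapply Rle_trans. apply powp_le; [split; [lra|exact H]|lra].
  rewrite powp_mult by (try lra; unfold Rmax; destruct (Rle_dec a b); lra).
  apply Rmult_le_compat_l. apply powp_nonneg.
  unfold Rmax; destruct (Rle_dec a b); pose proof (powp_nonneg a p); pose proof (powp_nonneg b p); lra.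
Qed.

Lemma sum_n_nonneg (a : nat -> R) n : (forall i, 0 <= a i) -> 0 <= sum_n a n.
Proof. intros H. induction n. rewrite sum_O; auto. rewrite sum_Sn; unfold plus; simpl. specialize (H (S n)); lra. Qed.

Lemma sum_n_ge_term (a : nat -> R) k n : (forall i, 0 <= a i) -> (k <= n)%nat -> a k <= sum_n a n.
Proof.
  intros Hpos Hk. induction n.
  - assert (k = 0%nat) by lia. subst. rewrite sum_O. lra.
  - destruct (Nat.eq_dec k (S n)) as [->|Hne].
    + rewrite sum_Sn. unfold plus; simpl. pose proof (sum_n_nonneg a n Hpos). lra.
    + rewrite sum_Sn. unfold plus; simpl. specialize (IHn ltac:(lia)). specialize (Hpos (S n)). lra.
Qed.

Lemma sum_n_le_series (a : nat -> R) n : (forall i, 0 <= a i) -> ex_series a -> sum_n a n <= Series a.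
Proof.
  intros Hpos Hex. apply (is_lim_seq_incr_compare (sum_n a)).
  - apply Series_correct in Hex. exact Hex.
  - intros m. rewrite sum_Sn. unfold plus; simpl. specialize (Hpos (S m)). lra.
Qed.

Lemma series_ge_term (a : nat -> R) k : (forall i, 0 <= a i) -> ex_series a -> a k <= Series a.
Proof. intros. eapply Rle_trans. apply (sum_n_ge_term a k k); auto. apply sum_n_le_series; auto. Qed.

Lemma series_nonneg (a : nat -> R) : (forall i, 0 <= a i) -> ex_series a -> 0 <= Series a.
Proof. intros H1 H2. eapply Rle_trans. apply (H1 0%nat). apply series_ge_term; auto. Qed.

Lemma series_le_bound (a : nat -> R) B : (forall i, 0 <= a i) -> (forall n, sum_n a n <= B) ->
  ex_series a /\ Series a <= B.
Proof.
  intros Hpos HB.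
  assert (Hex : ex_series a).
  { apply ex_series_Reals_1.
    destruct (completeness (fun x => exists n, x = sum_f_R0 a n)) as [l [Hl1 Hl2]].
    - exists B. intros x [n ->]. rewrite <- sum_n_Reals. apply HB.
    - exists (a 0%nat). exists 0%nat. reflexivity.
    - exists l. apply Un_cv_crit_lub. intros n. simpl. specialize (Hpos (S n)). lra.
      split; assumption. }
  split; auto.
  apply (is_lim_seq_le (sum_n a) (fun _ => B) (Series a) B); auto.
  apply Series_correct in Hex; exact Hex. apply is_lim_seq_const.
Qed.

Lemma lim0_bounded (u : nat -> R) : is_lim_seq u 0 -> exists B, forall n, u n <= B.
Proof.
  intros H. apply is_lim_seq_spec in H. destruct (H (mkposreal 1 Rlt_0_1)) as [N HN]. simpl in HN.
  assert (forall M, exists B, forall n, (n < M)%nat -> u n <= B).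
  { induction M. exists 0. intros; lia.
    destruct IHM as [B HB]. exists (Rmax B (u M)). intros n Hn.
    destruct (Nat.eq_dec n M) as [->|]. apply Rmax_r. eapply Rle_trans. apply HB; lia. apply Rmax_l. }
  destruct (H0 N) as [B HB]. exists (Rmax B 1). intros n.
  destruct (Nat.lt_ge_cases n N). eapply Rle_trans. apply HB; auto. apply Rmax_l.
  specialize (HN n H1). rewrite Rminus_0_r in HN. apply Rabs_lt_between in HN.
  eapply Rle_trans. 2: apply Rmax_r. lra.
Qed.

Lemma sup_finite (u : nat -> R) B : (forall n, u n <= B) -> Sup_seq u = Finite (real (Sup_seq u)).
Proof.
  intros HB.
  assert (H1 : Rbar_le (Sup_seq u) B).
  { destruct (Rbar_le_lt_dec (Sup_seq u) B) as [h|h]; auto.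
    apply Sup_seq_minor_lt in h. destruct h as [n hn]. simpl in hn. specialize (HB n). lra. }
  assert (H2 : Rbar_le (u 0%nat) (Sup_seq u)) by (apply (Sup_seq_minor_le _ _ 0%nat); simpl; lra).
  destruct (Sup_seq u); simpl in *; try contradiction; reflexivity.
Qed.

Lemma sup_ge_term (u : nat -> R) B k : (forall n, u n <= B) -> u k <= real (Sup_seq u).
Proof.
  intros HB. pose proof (sup_finite u B HB) as E.
  assert (H2 : Rbar_le (u k) (Sup_seq u)) by (apply (Sup_seq_minor_le _ _ k); simpl; lra).
  rewrite E in H2. exact H2.
Qed.

Lemma sup_le_bound (u : nat -> R) B : (forall n, u n <= B) -> real (Sup_seq u) <= B.
Proof.
  intros HB. pose proof (sup_finite u B HB) as E.
  assert (H1 : Rbar_le (Sup_seq u) B).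
  { destruct (Rbar_le_lt_dec (Sup_seq u) B) as [h|h]; auto.
    apply Sup_seq_minor_lt in h. destruct h as [n hn]. simpl in hn. specialize (HB n). lra. }
  rewrite E in H1. exact H1.
Qed.

Lemma ex_series_le_R (a b : nat -> R) : (forall n, 0 <= a n <= b n) -> ex_series b -> ex_series a.
Proof.
  intros H Hb. apply (@ex_series_le R_AbsRing R_CompleteNormedModule a b); auto.
  intros n. unfold norm; simpl; unfold abs; simpl. rewrite Rabs_pos_eq; apply H.
Qed.

Lemma exs_scal c (a : nat -> R) : ex_series a -> ex_series (fun n => c * a n).
Proof. intros H. apply (ex_series_scal_l c a) in H. exact H. Qed.

Lemma exs_plus (a b : nat -> R) : ex_series a -> ex_series b -> ex_series (fun n => a n + b n).
Proof. intros H1 H2. pose proof (ex_series_plus a b H1 H2) as H. exact H. Qed.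

Lemma inX_dom X y e C : valid_space X -> 0 <= C -> (forall q, Cmod (y q) <= C * e q) ->
  (forall q, 0 <= e q <= 1) -> ex_series e -> inX X y.
Proof.
  intros HX HC Hy He Hs. destruct X as [p|]; simpl in *.
  - apply (ex_series_le_R _ (fun q => powp C p * e q)).
    + intros q. split. apply powp_nonneg.
      eapply Rle_trans. apply powp_le. split. apply Cmod_ge_0. apply Hy. lra.
      rewrite powp_mult by (try lra; apply He).
      apply Rmult_le_compat_l. apply powp_nonneg. apply powp_le_self; auto.
    + apply (ex_series_scal_l (powp C p) e) in Hs. exact Hs.
  - apply ex_series_lim_0 in Hs.
    apply (is_lim_seq_le_le (fun _ => 0) _ (fun q => C * e q)).
    intros q; split; [apply Cmod_ge_0|apply Hy]. apply is_lim_seq_const.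
    replace 0 with (C * 0) by ring. apply (is_lim_seq_scal_l _ C 0). exact Hs.
Qed.

Lemma inX_sub X y z : valid_space X -> inX X y -> inX X z -> inX X (csub y z).
Proof.
  intros HX Hy Hz. destruct X as [p|]; simpl in *; unfold csub.
  - apply (ex_series_le_R _ (fun q => powp 2 p * (powp (Cmod (y q)) p + powp (Cmod (z q)) p))).
    + intros q. split. apply powp_nonneg.
      eapply Rle_trans. apply powp_le. split. apply Cmod_ge_0.
      unfold Cminus. eapply Rle_trans. apply Cmod_triangle. rewrite Cmod_opp. apply Rle_refl. lra.
      apply powp_sum_le; try apply Cmod_ge_0; lra.
    + apply exs_scal, exs_plus; auto.
  - apply (is_lim_seq_le_le (fun _ => 0) _ (fun q => Cmod (y q) + Cmod (z q))).
    intros q; split. apply Cmod_ge_0. unfold Cminus. eapply Rle_trans. apply Cmod_triangle. rewrite Cmod_opp. lra.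
    apply is_lim_seq_const. replace (Finite 0) with (Rbar_plus 0 0) by (simpl; f_equal; ring).
    apply is_lim_seq_plus'; auto.
Qed.

Lemma coord_le_norm X w k : valid_space X -> inX X w -> Cmod (w k) <= normX X w.
Proof.
  intros HX Hw. destruct X as [p|]; simpl in *.
  - rewrite <- (powp_inv (Cmod (w k)) p) by (try apply Cmod_ge_0; lra).
    apply powp_le. split. apply powp_nonneg. apply (series_ge_term (fun n => powp (Cmod (w n)) p)); auto. intros; apply powp_nonneg.
    apply Rlt_le, Rdiv_lt_0_compat; lra.
  - destruct (lim0_bounded _ Hw) as [B HB]. apply (sup_ge_term (fun n => Cmod (w n)) B). exact HB.
Qed.


Lemma iter_lamB lam n (y : cseq) k :
  Nat.iter n (lamB lam) y k = Cmult (Cpow lam n) (y (n + k)%nat).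
Proof.
  revert k. induction n; intros k; simpl.
  - unfold Cmult; simpl. apply injective_projections; simpl; ring.
  - unfold lamB at 1. rewrite IHn. replace (n + S k)%nat with (S (n + k)) by lia.
    rewrite Cmult_assoc. reflexivity.
Qed.

Lemma Cmod_iter lam n y k :
  Cmod (Nat.iter n (lamB lam) y k) = Cmod lam ^ n * Cmod (y (n + k)%nat).
Proof. rewrite iter_lamB, Cmod_mult, Cmod_pow. reflexivity. Qed.

Lemma pow_lt_inv_nat r a b : 1 < r -> r ^ a < r ^ b -> (a < b)%nat.
Proof.
  intros Hr H. destruct (Nat.lt_ge_cases a b); auto.
  exfalso. assert (r ^ b <= r ^ a) by (apply Rle_pow; lra || lia). lra.
Qed.

Lemma pow_lt_base a b m : (0 < m)%nat -> 0 <= a -> 0 <= b -> a ^ m < b ^ m -> a < b.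
Proof.
  intros Hm Ha Hb H. destruct (Rlt_le_dec a b); auto. exfalso.
  assert (b ^ m <= a ^ m) by (apply pow_incr; lra). lra.
Qed.

Lemma ex_series_fin (a : nat -> R) N : (forall q, (N <= q)%nat -> a q = 0) -> ex_series a.
Proof.
  intros H. apply (ex_series_incr_n a N). apply (ex_series_ext (fun _ => 0)).
  intros k. rewrite H by lia. reflexivity.
  apply (series_le_bound (fun _ => 0) 0). intros; lra.
  intros n. induction n. rewrite sum_O; lra. rewrite sum_Sn. unfold plus; simpl. lra.
Qed.

Lemma C1_real (r au av e t e' t' : R) (n m n' m' : nat) :
  1 < r -> (0 < m)%nat -> (0 < m')%nat -> 0 <= au -> 0 <= av ->
  0 < e -> e * 2 ^ m <= 1 -> 2 <= t -> 0 < e' -> e' <= 1/2 -> 2 <= t' ->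
  r ^ n * au ^ m < e -> t - e < r ^ n * av ^ m ->
  t' - e' < r ^ n' * au ^ m' -> r ^ n' * av ^ m' < t' + e' -> False.
Proof.
  intros Hr Hm Hm' Hau Hav He He2 Ht He' He'2 Ht' H1 H3 H2 H4.
  assert (Hrn : 0 < r ^ n) by (apply pow_lt; lra).
  assert (Hrn' : 0 < r ^ n') by (apply pow_lt; lra).
  assert (Hp2 : 0 < 2 ^ m) by (apply pow_lt; lra).
  assert (Hp2' : 1 <= 2 ^ m') by (apply pow_R1_Rle; lra).
  assert (Hau_m : 0 <= au ^ m) by (apply pow_le; lra).
  assert (Hav_m : 0 <= av ^ m) by (apply pow_le; lra).
  assert (Hau_m' : 0 <= au ^ m') by (apply pow_le; lra).
  assert (Hav_m' : 0 <= av ^ m') by (apply pow_le; lra).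
  assert (Hp2m : 1 <= 2 ^ m) by (apply pow_R1_Rle; lra).
  assert (He1 : e <= 1) by nra.
  assert (A1 : au ^ m < (av / 2) ^ m).
  { unfold Rdiv. rewrite Rpow_mult_distr, pow_inv.
    assert (au ^ m * r ^ n < e * (r ^ n * av ^ m)).
    { assert (1 <= r ^ n * av ^ m) by lra. nra. }
    assert (au ^ m < e * av ^ m) by nra.
    assert (e * av ^ m <= av ^ m * / 2 ^ m).
    { apply (Rmult_le_reg_r (2 ^ m)); auto. replace (av ^ m * / 2 ^ m * 2 ^ m) with (av ^ m) by (field; lra). nra. }
    lra. }
  apply pow_lt_base in A1; auto; try lra.
  assert (A2 : av ^ m' < (2 * au) ^ m').
  { rewrite Rpow_mult_distr.
    assert (t' + e' <= 2 * (t' - e')) by lra.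
    assert (r ^ n' * av ^ m' < 2 * (r ^ n' * au ^ m')) by lra.
    assert (av ^ m' < 2 * au ^ m') by nra.
    assert (2 <= 2 ^ m'). { destruct m'. lia. simpl. assert (1 <= 2 ^ m') by (apply pow_R1_Rle; lra). lra. }
    nra. }
  apply pow_lt_base in A2; auto; try lra.
Qed.

Lemma C3_real (r au av e t e' t' : R) (n m n' m' : nat) :
  1 < r -> (0 < m)%nat -> (0 < m')%nat -> 0 <= au -> 0 <= av ->
  e < t - e -> e' < t' - e' ->
  r ^ n * au ^ m < e -> t - e < r ^ n * av ^ m ->
  t' - e' < r ^ n' * au ^ m' -> r ^ n' * av ^ m' < e' -> False.
Proof.
  intros Hr Hm Hm' Hau Hav He He' H1 H3 H2 H4.
  assert (Hrn : 0 < r ^ n) by (apply pow_lt; lra).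
  assert (Hrn' : 0 < r ^ n') by (apply pow_lt; lra).
  assert (A1 : au ^ m < av ^ m) by nra.
  assert (A2 : av ^ m' < au ^ m') by nra.
  apply pow_lt_base in A1; auto; try lra.
  apply pow_lt_base in A2; auto; try lra.
Qed.

Lemma growth_real (r a e : R) (n m l n' m' l' : nat) :
  1 < r -> (0 < m')%nat -> 0 <= a -> 0 < e -> e * r ^ l <= 1 ->
  r ^ n * a ^ m < e -> r ^ (l' * m') <= r ^ n' * a ^ m' ->
  (l' * m' * m + (n + l) * m' < n' * m)%nat.
Proof.
  intros Hr Hm' Ha He Hel H1 H2.
  apply (pow_lt_inv_nat r); auto.
  assert (Hrl : 0 < r ^ l) by (apply pow_lt; lra).
  assert (Hy0 : 0 <= r ^ n * a ^ m * r ^ l) by (apply Rmult_le_pos; [apply Rmult_le_pos|]; try apply pow_le; lra).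
  assert (Hy1 : r ^ n * a ^ m * r ^ l < 1) by nra.
  assert (B1 : (r ^ n * a ^ m * r ^ l) ^ m' < 1) by (apply pow_lt_1_compat; auto).
  assert (B2 : (r ^ (l' * m')) ^ m <= (r ^ n' * a ^ m') ^ m).
  { apply pow_incr. split; auto. apply pow_le; lra. }
  rewrite !Rpow_mult_distr in B1, B2. rewrite Rpow_mult_distr in B1.
  rewrite <- !pow_mult in B1, B2.
  rewrite pow_add. rewrite Nat.mul_add_distr_r, pow_add.
  replace (m * m')%nat with (m' * m)%nat in B1 by lia.
  assert (Hp : 0 < r ^ (n' * m)) by (apply pow_lt; lra).
  assert (Hx : 0 < r ^ (n * m') * r ^ (l * m')) by (apply Rmult_lt_0_compat; apply pow_lt; lra).
  assert (HA : 0 <= a ^ (m' * m)) by (apply pow_le; lra).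
  set (X := r ^ (n * m') * r ^ (l * m')) in *.
  set (A := a ^ (m' * m)) in *.
  set (Q := r ^ (n' * m)) in *.
  assert (E : r ^ (n * m') * A * r ^ (l * m') = A * X) by (unfold X; ring).
  rewrite E in B1.
  assert (r ^ (l' * m' * m) * X <= Q * A * X) by (apply Rmult_le_compat_r; lra).
  nra.
Qed.

Definition xp (x : cseq) (m : nat) : cseq := fun q => Cpow (x q) m.
Definition bigp (n l m q : nat) : Prop := q = n \/ q = (n + l)%nat \/ q = (n + l + m)%nat.
Definition tgt (r : R) (l m : nat) : R := r ^ (l * m) + 1.
Definition epsN (r : R) (l m : nat) : R := / (2 ^ (S m) * r ^ l).
Definition tauN (r : R) (l m : nat) : cseq := fun k =>
  if (Nat.eqb k 0 || Nat.eqb k l || Nat.eqb k (l + m))%bool then RtoC (tgt r l m) else RtoC 0.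
Definition UN (X : seqspace) (r : R) (l m : nat) : cseq -> Prop := fun y =>
  inX X y /\ exists s, s < epsN r l m /\ forall k, Cmod (Cminus (y k) (tauN r l m k)) <= s.

Lemma Cmod_rev a b : Cmod a - Cmod b <= Cmod (Cminus a b).
Proof.
  assert (Cmod a <= Cmod (Cminus a b) + Cmod b).
  { replace a with (Cplus (Cminus a b) b) at 1 by (unfold Cminus; ring). apply Cmod_triangle. }
  lra.
Qed.

Lemma Cmod_minus_sym a b : Cmod (Cminus a b) = Cmod (Cminus b a).
Proof. replace (Cminus a b) with (Copp (Cminus b a)) by ring. apply Cmod_opp. Qed.

Lemma tauN_val r l m k : 0 < tgt r l m ->
  (k = 0%nat \/ k = l \/ k = (l + m)%nat -> Cmod (tauN r l m k) = tgt r l m) /\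
  (~ (k = 0%nat \/ k = l \/ k = (l + m)%nat) -> Cmod (tauN r l m k) = 0).
Proof.
  intros Ht. unfold tauN.
  destruct (Nat.eqb_spec k 0), (Nat.eqb_spec k l), (Nat.eqb_spec k (l+m)); simpl;
  rewrite ?Cmod_R, ?Rabs_R0; try rewrite Rabs_pos_eq by lra; split; intros; try lra; tauto.
Qed.

Lemma tgt_ge2 r l m : 1 < r -> 2 <= tgt r l m.
Proof. intros Hr. unfold tgt. assert (1 <= r ^ (l * m)) by (apply pow_R1_Rle; lra). lra. Qed.

Lemma epsN_pos r l m : 1 < r -> 0 < epsN r l m.
Proof. intros Hr. unfold epsN. apply Rinv_0_lt_compat. apply Rmult_lt_0_compat; apply pow_lt; lra. Qed.

Lemma epsN_props r l m : 1 < r ->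
  epsN r l m * 2 ^ m <= 1 /\ epsN r l m <= 1/2 /\ epsN r l m * r ^ l <= 1.
Proof.
  intros Hr. unfold epsN. simpl.
  assert (H1 : 1 <= 2 ^ m) by (apply pow_R1_Rle; lra).
  assert (H2 : 1 <= r ^ l) by (apply pow_R1_Rle; lra).
  repeat split.
  - replace (/ (2 * 2 ^ m * r ^ l) * 2 ^ m) with (/ (2 * r ^ l)) by (field; lra).
    apply Rle_trans with (/ 1). apply Rinv_le_contravar; lra. lra.
  - replace (/ (2 * 2 ^ m * r ^ l)) with (/2 * / (2 ^ m * r ^ l)) by (field; lra).
    assert (/ (2 ^ m * r ^ l) <= 1). { apply Rle_trans with (/ 1). apply Rinv_le_contravar; nra. lra. }
    assert (0 < / (2 ^ m * r ^ l)) by (apply Rinv_0_lt_compat; nra). lra.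
  - replace (/ (2 * 2 ^ m * r ^ l) * r ^ l) with (/ (2 * 2 ^ m)) by (field; lra).
    apply Rle_trans with (/ 1). apply Rinv_le_contravar; lra. lra.
Qed.

Lemma UN_open X r l m : valid_space X -> 1 < r -> openX X (UN X r l m).
Proof.
  intros HX Hr. split. intros x [Hx _]; exact Hx.
  intros y [Hy [s [Hs Hk]]]. exists (epsN r l m - s). split. lra.
  intros z Hz Hn. split; auto. exists (normX X (csub z y) + s). split. lra.
  intros k. eapply Rle_trans.
  replace (Cminus (z k) (tauN r l m k)) with (Cplus (Cminus (z k) (y k)) (Cminus (y k) (tauN r l m k))) by (unfold Cminus; ring).
  apply Cmod_triangle. apply Rplus_le_compat; auto.
  apply (coord_le_norm X (csub z y) k HX). apply inX_sub; auto.
Qed.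

Lemma UN_nonempty X r l m : valid_space X -> 1 < r -> exists y, UN X r l m y.
Proof.
  intros HX Hr. exists (tauN r l m). split.
  - apply (inX_dom X _ (fun q => if Nat.leb q (l + m) then 1 else 0) (tgt r l m)); auto.
    pose proof (tgt_ge2 r l m Hr); lra.
    intros q. destruct (tauN_val r l m q) as [T1 T2]. pose proof (tgt_ge2 r l m Hr); lra.
    destruct (Nat.leb_spec q (l+m)).
    + destruct (classic (q = 0%nat \/ q = l \/ q = (l + m)%nat)) as [h|h].
      rewrite T1; auto; lra. rewrite T2; auto. pose proof (tgt_ge2 r l m Hr); lra.
    + rewrite T2 by lia. lra.
    intros q. destruct (Nat.leb q (l+m)); lra.
    apply (ex_series_fin _ (S (l + m))). intros q Hq. destruct (Nat.leb_spec q (l+m)); [lia|reflexivity].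
  - exists 0. split. apply epsN_pos; auto. intros k.
    replace (Cminus (tauN r l m k) (tauN r l m k)) with (RtoC 0) by ring. rewrite Cmod_0. lra.
Qed.

Lemma UN_fact X lam x l m n q : 1 < Cmod lam ->
  UN X (Cmod lam) l m (Nat.iter n (lamB lam) (xp x m)) -> (n <= q)%nat ->
  (bigp n l m q -> tgt (Cmod lam) l m - epsN (Cmod lam) l m < Cmod lam ^ n * Cmod (x q) ^ m < tgt (Cmod lam) l m + epsN (Cmod lam) l m) /\
  (~ bigp n l m q -> Cmod lam ^ n * Cmod (x q) ^ m < epsN (Cmod lam) l m).
Proof.
  intros Hr [_ [s [Hs Hk]]] Hq.
  set (r := Cmod lam) in *.
  set (k := (q - n)%nat). specialize (Hk k).
  assert (Hq' : q = (n + k)%nat) by (unfold k; lia).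
  assert (Ey : Cmod (Nat.iter n (lamB lam) (xp x m) k) = r ^ n * Cmod (x q) ^ m).
  { rewrite Cmod_iter. unfold xp. rewrite Cmod_pow, <- Hq'. reflexivity. }
  pose proof (Cmod_rev (Nat.iter n (lamB lam) (xp x m) k) (tauN r l m k)) as R1.
  pose proof (Cmod_rev (tauN r l m k) (Nat.iter n (lamB lam) (xp x m) k)) as R2.
  rewrite Cmod_minus_sym in R2.
  assert (Ht : 0 < tgt r l m) by (pose proof (tgt_ge2 r l m Hr); lra).
  destruct (tauN_val r l m k Ht) as [T1 T2].
  split.
  - intros Hb. assert (k = 0%nat \/ k = l \/ k = (l + m)%nat) by (unfold bigp in Hb; lia).
    rewrite T1 in R1, R2 by auto. rewrite Ey in R1, R2. lra.
  - intros Hb. assert (~ (k = 0%nat \/ k = l \/ k = (l + m)%nat)) by (unfold bigp in Hb; lia).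
    rewrite T2 in R1 by auto. rewrite Ey in R1. lra.
Qed.

Lemma combi (n l m n' l' m' : nat) : (1 <= l)%nat -> (1 <= m)%nat -> (1 <= l')%nat -> (1 <= m')%nat ->
  (n <= n')%nat -> ((n < n')%nat \/ (l, m) <> (l', m')) -> (n' <= n + l + m)%nat ->
  exists u v : nat, (n' <= u)%nat /\ (n' <= v)%nat /\
   ((~ bigp n l m u /\ bigp n' l' m' u /\ bigp n l m v /\ bigp n' l' m' v) \/
    (bigp n l m u /\ ~ bigp n' l' m' u /\ bigp n l m v /\ bigp n' l' m' v) \/
    (~ bigp n l m u /\ bigp n' l' m' u /\ bigp n l m v /\ ~ bigp n' l' m' v)).
Proof.
  intros Hl Hm Hl' Hm' Hnn' Hne Hup. unfold bigp.
  destruct (Nat.eq_dec n n') as [<-|Hlt].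
  - assert (Hpair : l <> l' \/ m <> m').
    { destruct Hne as [Hne|Hne]. lia. destruct (Nat.eq_dec l l'); destruct (Nat.eq_dec m m'); subst; auto. }
    destruct (Nat.lt_total l l') as [H|[H|H]].
    + exists (n + l)%nat, n. lia.
    + subst l'. destruct (Nat.lt_total m m') as [H|[H|H]].
      * exists (n + l + m)%nat, n. lia.
      * lia.
      * exists (n + l + m')%nat, n. lia.
    + exists (n + l')%nat, n. lia.
  - destruct (Nat.eq_dec n' (n + l)) as [E1|E1].
    + destruct (Nat.eq_dec m l') as [E2|E2].
      * exists (n' + l' + m')%nat, n'. lia.
      * destruct (Nat.eq_dec m (l' + m')) as [E3|E3].
        -- exists (n' + l')%nat, n'. lia.
        -- exists (n + l + m)%nat, n'. lia.
    + destruct (Nat.eq_dec n' (n + l + m)) as [E2|E2].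
      * exists (n' + l')%nat, n'. lia.
      * destruct (classic (n + l + m = n' \/ n + l + m = n' + l' \/ n + l + m = n' + l' + m')%nat) as [h|h].
        -- exists n', (n + l + m)%nat. lia.
        -- exists n', (n + l + m)%nat. lia.
Qed.

Lemma conflict X lam x l m n l' m' n' u v : 1 < Cmod lam -> (1 <= m)%nat -> (1 <= m')%nat ->
  UN X (Cmod lam) l m (Nat.iter n (lamB lam) (xp x m)) ->
  UN X (Cmod lam) l' m' (Nat.iter n' (lamB lam) (xp x m')) ->
  (n <= n')%nat -> (n' <= u)%nat -> (n' <= v)%nat ->
  ((~ bigp n l m u /\ bigp n' l' m' u /\ bigp n l m v /\ bigp n' l' m' v) \/
    (bigp n l m u /\ ~ bigp n' l' m' u /\ bigp n l m v /\ bigp n' l' m' v) \/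
    (~ bigp n l m u /\ bigp n' l' m' u /\ bigp n l m v /\ ~ bigp n' l' m' v)) -> False.
Proof.
  intros Hr Hm Hm' H1 H2 Hnn' Hu Hv Hcase.
  set (r := Cmod lam) in *.
  destruct (UN_fact X lam x l m n u Hr H1 ltac:(lia)) as [Fu1 Fu2].
  destruct (UN_fact X lam x l m n v Hr H1 ltac:(lia)) as [Fv1 Fv2].
  destruct (UN_fact X lam x l' m' n' u Hr H2 ltac:(lia)) as [Gu1 Gu2].
  destruct (UN_fact X lam x l' m' n' v Hr H2 ltac:(lia)) as [Gv1 Gv2].
  fold r in Fu1, Fu2, Fv1, Fv2, Gu1, Gu2, Gv1, Gv2.
  pose proof (epsN_pos r l m Hr). pose proof (epsN_pos r l' m' Hr).
  destruct (epsN_props r l m Hr) as [E1 [E2 E3]].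
  destruct (epsN_props r l' m' Hr) as [E1' [E2' E3']].
  pose proof (tgt_ge2 r l m Hr). pose proof (tgt_ge2 r l' m' Hr).
  pose proof (Cmod_ge_0 (x u)). pose proof (Cmod_ge_0 (x v)).
  destruct Hcase as [[a [b [c d]]]|[[a [b [c d]]]|[a [b [c d]]]]].
  - specialize (Fu2 a). specialize (Gu1 b). specialize (Fv1 c). specialize (Gv1 d).
    apply (C1_real r (Cmod (x u)) (Cmod (x v)) (epsN r l m) (tgt r l m) (epsN r l' m') (tgt r l' m') n m n' m');
      auto; try lia; try lra.
  - specialize (Fu1 a). specialize (Gu2 b). specialize (Fv1 c). specialize (Gv1 d).
    apply (C1_real r (Cmod (x u)) (Cmod (x v)) (epsN r l' m') (tgt r l' m') (epsN r l m) (tgt r l m) n' m' n m);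
      auto; try lia; try lra.
  - specialize (Fu2 a). specialize (Gu1 b). specialize (Fv1 c). specialize (Gv2 d).
    apply (C3_real r (Cmod (x u)) (Cmod (x v)) (epsN r l m) (tgt r l m) (epsN r l' m') (tgt r l' m') n m n' m');
      auto; try lia; try lra.
Qed.

Lemma xp_in_B X (B : cseq -> Prop) x m : subalgebra X B -> B x -> (1 <= m)%nat -> B (xp x m).
Proof.
  intros [_ [_ [_ [_ Hmul]]]] Hx Hm. induction m. lia.
  destruct m.
  - replace (xp x 1) with x; auto. apply functional_extensionality; intros q. unfold xp. rewrite Cpow_1_r. reflexivity.
  - replace (xp x (S (S m))) with (cmul x (xp x (S m))). apply Hmul; auto. apply IHm; lia.
    apply functional_extensionality; intros q. unfold xp, cmul. rewrite (Cpow_S (x q) (S m)). reflexivity.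
Qed.

Lemma xp_nonzero x m : x <> czero -> xp x m <> czero.
Proof.
  intros Hx Hc. apply Hx. apply functional_extensionality; intros q.
  destruct (classic (x q = RtoC 0)) as [h|h]; auto.
  exfalso. apply (Cpow_nz (x q) m h). change (xp x m q = czero q). rewrite Hc. reflexivity.
Qed.

Lemma necessity X A lam : valid_space X -> furstenberg A -> finitely_invariant A -> 1 < Cmod lam ->
  (exists B : cseq -> Prop,
      subalgebra X B /\ (exists x, B x /\ x <> czero) /\
      (forall x, B x -> x <> czero -> A_hypercyclic X A (lamB lam) x)) ->
   (exists F : nat -> nat -> (nat -> Prop),
      (forall l m, (1 <= l)%nat -> (1 <= m)%nat -> A (F l m)) /\
      (forall l m l' m', (1 <= l)%nat -> (1 <= m)%nat -> (1 <= l')%nat ->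
         (1 <= m')%nat -> (l, m) <> (l', m') ->
         forall n, ~ (F l m n /\ F l' m' n)) /\
      (forall l m l' m' n n', (1 <= l)%nat -> (1 <= m)%nat -> (1 <= l')%nat ->
         (1 <= m')%nat -> F l m n -> F l' m' n' -> (n' > n)%nat ->
         (n' >= n + l)%nat /\
         INR n' * INR m / INR m' >= INR (n + l + l'))).
Proof.
  intros HX HA HAi Hr [B [HB [[x [Hx Hx0]] Hhc]]].
  set (r := Cmod lam).
  exists (fun l m n => UN X r l m (Nat.iter n (lamB lam) (xp x m))).
  split; [|split].
  - intros l m Hl Hm. apply (Hhc (xp x m)). apply xp_in_B with X; auto. apply xp_nonzero; auto.
    apply UN_open; auto. apply UN_nonempty; auto.
  - intros l m l' m' Hl Hm Hl' Hm' Hne n [H1 H2].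
    destruct (combi n l m n l' m' Hl Hm Hl' Hm' (le_n n) (or_intror Hne) ltac:(lia)) as [u [v [Hu [Hv Hc]]]].
    apply (conflict X lam x l m n l' m' n u v); auto.
  - intros l m l' m' n n' Hl Hm Hl' Hm' H1 H2 Hgt.
    destruct (Nat.le_gt_cases n' (n + l + m)) as [Hle|Hgt2].
    + exfalso. destruct (combi n l m n' l' m' Hl Hm Hl' Hm' ltac:(lia) (or_introl Hgt) Hle) as [u [v [Hu [Hv Hc]]]].
      apply (conflict X lam x l m n l' m' n' u v); auto. lia.
    + destruct (UN_fact X lam x l m n n' Hr H1 ltac:(lia)) as [_ F2].
      destruct (UN_fact X lam x l' m' n' n' Hr H2 ltac:(lia)) as [G1 _].
      fold r in F2, G1.
      assert (Hnb : ~ bigp n l m n') by (unfold bigp; lia).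
      assert (Hb : bigp n' l' m' n') by (unfold bigp; lia).
      specialize (F2 Hnb). specialize (G1 Hb).
      destruct (epsN_props r l' m' Hr) as [_ [E2' _]].
      destruct (epsN_props r l m Hr) as [_ [_ E3]].
      assert (Hineq : (l' * m' * m + (n + l) * m' < n' * m)%nat).
      { apply (growth_real r (Cmod (x n')) (epsN r l m));
          [exact Hr | lia | apply Cmod_ge_0 | apply epsN_pos; exact Hr | exact E3 | exact F2 | unfold tgt in G1; lra]. }
      split. lia.
      assert (Hin : ((n + l + l') * m' <= n' * m)%nat) by nia.
      apply le_INR in Hin. rewrite !mult_INR in Hin.
      assert (0 < INR m') by (apply lt_0_INR; lia).
      apply Rle_ge. apply (Rmult_le_reg_r (INR m')); auto.
      replace (INR n' * INR m / INR m' * INR m') with (INR n' * INR m) by (field; lra). lra.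
Qed.


Lemma demoivre (rho t : R) (m : nat) :
  Cpow (rho * cos t, rho * sin t) m = (rho ^ m * cos (INR m * t), rho ^ m * sin (INR m * t)).
Proof.
  induction m.
  - simpl. rewrite Rmult_0_l, cos_0, sin_0. apply injective_projections; simpl; ring.
  - rewrite Cpow_S, IHm. rewrite S_INR.
    replace ((INR m + 1) * t) with (t + INR m * t) by ring.
    rewrite cos_plus, sin_plus. unfold Cmult; simpl.
    apply injective_projections; simpl; ring.
Qed.

Lemma croot_ex (w : C) (m : nat) : (1 <= m)%nat -> exists z, Cpow z m = w.
Proof.
  intros Hm. destruct (classic (w = RtoC 0)) as [->|Hw].
  - exists (RtoC 0). destruct m. lia. rewrite Cpow_S. ring.
  - assert (Ha : 0 < Cmod w) by (apply Cmod_gt_0; auto).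
    set (a := Cmod w) in *.
    destruct w as [w1 w2].
    set (u1 := w1 / a). set (u2 := w2 / a).
    assert (Hw2 : a ^ 2 = w1 ^ 2 + w2 ^ 2) by (unfold a; rewrite Cmod2_alt; reflexivity).
    assert (Hu : u1 ^ 2 + u2 ^ 2 = 1) by (unfold u1, u2; field_simplify; [rewrite <- Hw2; field|]; lra).
    assert (Hu1 : -1 <= u1 <= 1) by (split; nra).
    assert (Hs : sqrt (1 - u1²) = Rabs u2).
    { rewrite <- sqrt_Rsqr_abs. f_equal. unfold Rsqr. nra. }
    set (phi := if Rle_dec 0 u2 then acos u1 else - acos u1).
    assert (Hc : cos phi = u1) by (unfold phi; destruct (Rle_dec 0 u2); [|rewrite cos_neg]; apply cos_acos; auto).
    assert (Hsn : sin phi = u2).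
    { unfold phi; destruct (Rle_dec 0 u2). rewrite sin_acos, Hs, Rabs_pos_eq; auto.
      rewrite sin_neg, sin_acos, Hs, Rabs_left; auto. ring. lra. }
    set (rho := Rpower a (/ INR m)).
    exists (rho * cos (phi / INR m), rho * sin (phi / INR m)).
    rewrite demoivre.
    assert (Hm' : 0 < INR m) by (apply lt_0_INR; lia).
    replace (INR m * (phi / INR m)) with phi by (field; lra).
    assert (Hrho : rho ^ m = a).
    { unfold rho. rewrite <- Rpower_pow. rewrite Rpower_mult. replace (/ INR m * INR m) with 1 by (field; lra).
      apply Rpower_1; auto. unfold Rpower; apply exp_pos. }
    rewrite Hrho, Hc, Hsn. unfold u1, u2. apply injective_projections; simpl; field; lra.
Qed.

Open Scope C_scope.
Definition evalL (Lst : list (C * nat)) (z : C) : C :=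
  fold_right (fun p acc => fst p * Cpow z (snd p) + acc) (RtoC 0) Lst.

Definition mulL (L1 L2 : list (C * nat)) : list (C * nat) :=
  flat_map (fun p1 => map (fun p2 => (fst p1 * fst p2, (snd p1 + snd p2)%nat)) L2) L1.

Lemma evalL_app L1 L2 z : evalL (L1 ++ L2) z = evalL L1 z + evalL L2 z.
Proof. induction L1; simpl. ring. rewrite IHL1. ring. Qed.

Lemma evalL_scal a L z : evalL (map (fun p => (a * fst p, snd p)) L) z = a * evalL L z.
Proof. induction L; simpl. ring. rewrite IHL. ring. Qed.

Lemma evalL_map c e L z : evalL (map (fun p2 => (c * fst p2, (e + snd p2)%nat)) L) z = c * Cpow z e * evalL L z.
Proof. induction L; simpl. ring. rewrite IHL, Cpow_add_r. ring. Qed.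

Lemma evalL_mul L1 L2 z : evalL (mulL L1 L2) z = evalL L1 z * evalL L2 z.
Proof. induction L1; simpl. ring. unfold mulL in *. simpl. rewrite evalL_app, evalL_map, IHL1. ring. Qed.

Fixpoint csum (f : nat -> C) (D : nat) : C :=
  match D with O => RtoC 0 | S D => csum f D + f D end.

Lemma csum_plus (f g : nat -> C) D : csum (fun j => f j + g j) D = csum f D + csum g D.
Proof. induction D; simpl. ring. rewrite IHD. ring. Qed.

Lemma csum_ext (f g : nat -> C) D : (forall j, (j < D)%nat -> f j = g j) -> csum f D = csum g D.
Proof. induction D; intros H; simpl. auto. rewrite IHD, H; auto. Qed.

Lemma csum_zero_tail (f : nat -> C) D D' : (D <= D')%nat -> (forall j, (D <= j)%nat -> f j = RtoC 0) -> csum f D' = csum f D.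
Proof. intros Hle H. induction Hle; simpl. auto. rewrite IHHle, H by lia. ring. Qed.

Lemma csum_all_zero (f : nat -> C) D : (forall j, f j = RtoC 0) -> csum f D = RtoC 0.
Proof. intros H. induction D; simpl; auto. rewrite IHD, H. ring. Qed.

Lemma csum_delta (v : C) e D : (e < D)%nat -> csum (fun j => if Nat.eqb j e then v else RtoC 0) D = v.
Proof.
  intros H. induction D. lia. simpl. destruct (Nat.eqb_spec D e).
  - subst. rewrite (csum_ext _ (fun _ => 0)). 2: { intros j Hj. destruct (Nat.eqb_spec j e); [lia|auto]. }
    rewrite csum_all_zero by auto. ring.
  - rewrite IHD by lia. ring.
Qed.


Lemma nf_ex L : List.Forall (fun p => (1 <= snd p)%nat) L ->
  exists (c : nat -> C) D, c O = RtoC 0 /\ (forall j, (D <= j)%nat -> c j = RtoC 0) /\ forall z, evalL L z = csum (fun j => c j * Cpow z j) D.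
Proof.
  induction L as [|[c0 e] L IH]; intros HF.
  - exists (fun _ => RtoC 0), O. repeat split; auto.
  - inversion HF; subst. destruct (IH H2) as [c [D [H0 [HD Hev]]]]. simpl in H1.
    exists (fun j => c j + (if Nat.eqb j e then c0 else 0)), (Nat.max D (S e)).
    split; [|split].
    + rewrite H0. destruct (Nat.eqb_spec 0 e); [lia|]. ring.
    + intros j Hj. rewrite HD by lia. destruct (Nat.eqb_spec j e); [lia|]. ring.
    + intros z. simpl. rewrite Hev.
      rewrite (csum_ext (fun j => (c j + (if Nat.eqb j e then c0 else 0)) * Cpow z j) (fun j => c j * Cpow z j + (if Nat.eqb j e then c0 * Cpow z e else 0))).
      2: { intros j _. destruct (Nat.eqb_spec j e); subst; ring. }
      rewrite csum_plus. rewrite csum_delta by lia.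
      assert (E : csum (fun j => c j * Cpow z j) (Nat.max D (S e)) = csum (fun j => c j * Cpow z j) D).
      { apply csum_zero_tail. lia. intros j Hj. rewrite (HD j Hj). ring. }
      rewrite E. ring.
Qed.
Close Scope C_scope.

Fixpoint rsum (f : nat -> R) (D : nat) : R :=
  match D with O => 0 | S D => rsum f D + f D end.

Lemma rsum_le (f g : nat -> R) D : (forall j, (j < D)%nat -> f j <= g j) -> rsum f D <= rsum g D.
Proof. induction D; intros H; simpl. lra. specialize (IHD (fun j Hj => H j ltac:(lia))). specialize (H D ltac:(lia)). lra. Qed.

Lemma rsum_nonneg (f : nat -> R) D : (forall j, 0 <= f j) -> 0 <= rsum f D.
Proof. intros H. induction D; simpl. lra. specialize (H D). lra. Qed.

Lemma rsum_scal (f : nat -> R) a D : rsum (fun j => f j * a) D = rsum f D * a.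
Proof. induction D; simpl. ring. rewrite IHD. ring. Qed.

Lemma Cmod_csum (f : nat -> C) D : Cmod (csum f D) <= rsum (fun j => Cmod (f j)) D.
Proof. induction D; simpl. rewrite Cmod_0; lra. eapply Rle_trans. apply Cmod_triangle. lra. Qed.

Lemma pow_le_exp_dec (a : R) i j : 0 <= a <= 1 -> (i <= j)%nat -> a ^ j <= a ^ i.
Proof.
  intros Ha Hij. replace j with (i + (j - i))%nat by lia. rewrite pow_add.
  assert (0 <= a ^ i) by (apply pow_le; lra).
  assert (a ^ (j - i) <= 1) by (apply pow_le1 || (clear -Ha; induction (j - i)%nat; simpl; nra)).
  assert (0 <= a ^ (j - i)) by (apply pow_le; lra). nra.
Qed.

Lemma lowest (c : nat -> C) D : c O = RtoC 0 -> (forall j, (D <= j)%nat -> c j = RtoC 0) ->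
  (exists j, c j <> RtoC 0) ->
  exists m a Cc, (1 <= m)%nat /\ a <> RtoC 0 /\ 0 <= Cc /\ forall z, Cmod z <= 1 ->
   Cmod (Cminus (csum (fun j => Cmult (c j) (Cpow z j)) D) (Cmult a (Cpow z m))) <= Cc * Cmod z ^ (S m) /\
   Cmod (csum (fun j => Cmult (c j) (Cpow z j)) D) <= (Cmod a + Cc) * Cmod z ^ m.
Proof.
  intros H0 HD Hex.
  destruct (dec_inh_nat_subset_has_unique_least_element (fun j => c j <> RtoC 0)) as [m [[Hm Hmin] _]].
  { intros n. apply classic. } { exact Hex. }
  assert (HmD : (m < D)%nat) by (destruct (Nat.lt_ge_cases m D); auto; exfalso; apply Hm; apply HD; auto).
  assert (Hm1 : (1 <= m)%nat) by (destruct m; [contradiction|lia]).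
  exists m, (c m), (rsum (fun j => Cmod (c j)) D).
  split; [auto|split; [auto|split]].
  apply rsum_nonneg; intros; apply Cmod_ge_0.
  intros z Hz.
  assert (Hz0 : 0 <= Cmod z) by apply Cmod_ge_0.
  assert (Split : csum (fun j => Cmult (c j) (Cpow z j)) D =
     Cplus (csum (fun j => if Nat.eqb j m then RtoC 0 else Cmult (c j) (Cpow z j)) D) (Cmult (c m) (Cpow z m))).
  { rewrite <- (csum_delta (Cmult (c m) (Cpow z m)) m D HmD). rewrite <- csum_plus.
    apply csum_ext. intros j _. destruct (Nat.eqb_spec j m); subst; ring. }
  assert (Bd : Cmod (csum (fun j => if Nat.eqb j m then RtoC 0 else Cmult (c j) (Cpow z j)) D)
     <= rsum (fun j => Cmod (c j)) D * Cmod z ^ (S m)).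
  { eapply Rle_trans. apply Cmod_csum. rewrite <- rsum_scal. apply rsum_le. intros j _.
    destruct (Nat.eqb_spec j m). rewrite Cmod_0. apply Rmult_le_pos. apply Cmod_ge_0. apply pow_le; auto.
    destruct (Nat.lt_ge_cases j m).
    - assert (Hcj : c j = RtoC 0). { destruct (classic (c j = RtoC 0)) as [h|h]; auto. specialize (Hmin j h). lia. }
      rewrite Hcj. rewrite Cmult_0_l, !Cmod_0. lra.
    - rewrite Cmod_mult, Cmod_pow. apply Rmult_le_compat_l. apply Cmod_ge_0. apply pow_le_exp_dec. lra. lia. }
  split.
  - rewrite Split. replace (Cminus (Cplus _ (Cmult (c m) (Cpow z m))) (Cmult (c m) (Cpow z m)))
      with (csum (fun j => if Nat.eqb j m then RtoC 0 else Cmult (c j) (Cpow z j)) D) by ring. exact Bd.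
  - rewrite Split. eapply Rle_trans. apply Cmod_triangle. rewrite Cmod_mult, Cmod_pow.
    assert (Cmod z ^ S m <= Cmod z ^ m) by (apply pow_le_exp_dec; lia || lra).
    assert (0 <= rsum (fun j => Cmod (c j)) D) by (apply rsum_nonneg; intros; apply Cmod_ge_0).
    assert (rsum (fun j => Cmod (c j)) D * Cmod z ^ S m <= rsum (fun j => Cmod (c j)) D * Cmod z ^ m) by (apply Rmult_le_compat_l; auto).
    lra.
Qed.

Definition sumc (L : list (C * nat)) : R := fold_right (fun p acc => Cmod (fst p) + acc) 0 L.

Lemma evalL_bound L z : List.Forall (fun p => (1 <= snd p)%nat) L -> Cmod z <= 1 ->
  Cmod (evalL L z) <= sumc L * Cmod z.
Proof.
  intros HF Hz. induction L as [|[c e] L IH]; simpl.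
  - rewrite Cmod_0. lra.
  - inversion HF; subst. simpl in H1. specialize (IH H2).
    eapply Rle_trans. apply Cmod_triangle. rewrite Cmod_mult, Cmod_pow.
    assert (Cmod z ^ e <= Cmod z ^ 1) by (apply pow_le_exp_dec; [split; [apply Cmod_ge_0|lra]|lia]).
    simpl in H. rewrite Rmult_1_r in H.
    assert (Cmod c * Cmod z ^ e <= Cmod c * Cmod z) by (apply Rmult_le_compat_l; [apply Cmod_ge_0|lra]).
    lra.
Qed.

Lemma sumc_nonneg L : 0 <= sumc L.
Proof. induction L; simpl. lra. pose proof (Cmod_ge_0 (fst a)). lra. Qed.

Definition PolyB (x : cseq) : cseq -> Prop := fun y =>
  exists Lst, List.Forall (fun p => (1 <= snd p)%nat) Lst /\ y = (fun q => evalL Lst (x q)).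

Lemma PolyB_sub X x : valid_space X -> (forall q, Cmod (x q) <= 1) -> ex_series (fun q => Cmod (x q)) ->
  subalgebra X (PolyB x).
Proof.
  intros HX Hx1 Hxs. split; [|split; [|split; [|split]]].
  - intros y [L [HF ->]]. apply (inX_dom X _ (fun q => Cmod (x q)) (sumc L)); auto.
    apply sumc_nonneg. intros q. apply evalL_bound; auto.
    intros q. split; auto. apply Cmod_ge_0.
  - exists nil. split. constructor. reflexivity.
  - intros y z [L1 [H1 ->]] [L2 [H2 ->]]. exists (L1 ++ L2). split.
    apply Forall_app; auto. apply functional_extensionality; intros q. unfold cadd. rewrite evalL_app. reflexivity.
  - intros a y [L [H ->]]. exists (map (fun p => (Cmult a (fst p), snd p)) L). split.
    apply Forall_map. eapply Forall_impl; [|exact H]. intros p Hp; simpl; auto.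
    apply functional_extensionality; intros q. unfold cscal. rewrite evalL_scal. reflexivity.
  - intros y z [L1 [H1 ->]] [L2 [H2 ->]]. exists (mulL L1 L2). split.
    + unfold mulL. apply Forall_flat_map. eapply Forall_impl; [|exact H1]. intros p1 Hp1.
      apply Forall_map. eapply Forall_impl; [|exact H2]. intros p2 Hp2. simpl in *. lia.
    + apply functional_extensionality; intros q. unfold cmul. rewrite evalL_mul. reflexivity.
Qed.

Lemma PolyB_x x : PolyB x x.
Proof. exists ((RtoC 1, 1%nat) :: nil). split. repeat constructor.
  apply functional_extensionality; intros q. simpl. ring. Qed.

Lemma PolyB_nonzero x y : PolyB x y -> y <> czero ->
  exists P : C -> C, exists m a Cc, y = (fun q => P (x q)) /\ (1 <= m)%nat /\ a <> RtoC 0 /\ 0 <= Cc /\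
    forall z, Cmod z <= 1 ->
      Cmod (Cminus (P z) (Cmult a (Cpow z m))) <= Cc * Cmod z ^ (S m) /\
      Cmod (P z) <= (Cmod a + Cc) * Cmod z ^ m.
Proof.
  intros [L [HF ->]] Hne.
  destruct (nf_ex L HF) as [c [D [H0 [HD Hev]]]].
  assert (Hex : exists j, c j <> RtoC 0).
  { apply NNPP. intros Hn. apply Hne. apply functional_extensionality; intros q.
    rewrite Hev. unfold czero. apply csum_all_zero. intros j.
    destruct (classic (c j = RtoC 0)) as [h|h]. rewrite h; ring. exfalso; apply Hn; eauto. }
  destruct (lowest c D H0 HD Hex) as [m [a [Cc [Hm [Ha [HC Hb]]]]]].
  exists (evalL L), m, a, Cc. split; auto. split; auto. split; auto. split; auto.
  intros z Hz. rewrite Hev. apply Hb; auto.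
Qed.


Definition lvl_s (l : nat) : nat := snd (Cantor.of_nat l).
Definition lvl_code (l : nat) : nat := fst (Cantor.of_nat l).
Definition lvl_S (l : nat) : nat := fst (Cantor.of_nat (lvl_code l)).
Definition lvl_N (l : nat) : nat := fst (Cantor.of_nat (snd (Cantor.of_nat (lvl_code l)))).
Definition lvl_dig (l : nat) : nat := snd (Cantor.of_nat (snd (Cantor.of_nat (lvl_code l)))).
Definition digit (c k : nat) : nat := fst (Cantor.of_nat (Nat.iter k (fun c => snd (Cantor.of_nat c)) c)).
Definition zint (n : nat) : R := INR (fst (Cantor.of_nat n)) - INR (snd (Cantor.of_nat n)).
Definition gauss (N d : nat) : C := (zint (fst (Cantor.of_nat d)) / INR (S N), zint (snd (Cantor.of_nat d)) / INR (S N)).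
Definition traw (l k : nat) : C := if Nat.ltb k (lvl_S l) then gauss (lvl_N l) (digit (lvl_dig l) k) else RtoC 0.
Definition theta (r : R) (l k : nat) : C := if Rle_dec (Cmod (traw l k)) (r ^ lvl_s l) then traw l k else RtoC 0.

Lemma of_nat_le1 l : (fst (Cantor.of_nat l) <= l)%nat.
Proof. pose proof (Cantor.cancel_to_of l) as E. destruct (Cantor.of_nat l) as [a b].
  pose proof (Cantor.to_nat_non_decreasing a b). cbn [fst]. lia. Qed.
Lemma of_nat_le2 l : (snd (Cantor.of_nat l) <= l)%nat.
Proof. pose proof (Cantor.cancel_to_of l) as E. destruct (Cantor.of_nat l) as [a b].
  pose proof (Cantor.to_nat_non_decreasing a b). cbn [snd]. lia. Qed.

Lemma lvl_s_le l : (lvl_s l <= l)%nat.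
Proof. apply of_nat_le2. Qed.
Lemma lvl_S_le l : (lvl_S l <= l)%nat.
Proof. unfold lvl_S, lvl_code. pose proof (of_nat_le1 l). pose proof (of_nat_le1 (fst (Cantor.of_nat l))). lia. Qed.

Lemma theta_bound r l k : 0 < r -> Cmod (theta r l k) <= r ^ lvl_s l.
Proof. intros Hr. unfold theta. destruct (Rle_dec _ _); auto. rewrite Cmod_0. apply pow_le; lra. Qed.

Lemma theta_supp r l k : (lvl_S l <= k)%nat -> theta r l k = RtoC 0.
Proof. intros H. unfold theta, traw. destruct (Nat.ltb_spec k (lvl_S l)); [lia|]. destruct (Rle_dec _ _); auto. Qed.

Lemma digit_surj Sz (f : nat -> nat) : exists c, forall k, (k < Sz)%nat -> digit c k = f k.
Proof.
  revert f. induction Sz as [|Sz IHS]; intros f. exists 0%nat; intros; lia.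
  destruct (IHS (fun k => f (S k))) as [c' Hc']. exists (Cantor.to_nat (f 0%nat, c')).
  intros k Hk. destruct k.
  - unfold digit. change (Nat.iter 0 ?g ?c) with c. rewrite Cantor.cancel_of_to. reflexivity.
  - unfold digit. rewrite Nat.iter_succ_r. rewrite Cantor.cancel_of_to. cbn [snd].
    apply (Hc' k). lia.
Qed.

Lemma to_nat_nonpos (z : Z) : (z <= 0)%Z -> Z.to_nat z = 0%nat.
Proof. destruct z; simpl; auto; lia. Qed.

Lemma zint_surj (z : Z) : exists n, zint n = IZR z.
Proof.
  exists (Cantor.to_nat (Z.to_nat z, Z.to_nat (- z))). unfold zint. rewrite Cantor.cancel_of_to. simpl.
  rewrite !INR_IZR_INZ. destruct (Z.le_gt_cases 0 z).
  - rewrite Z2Nat.id by lia. rewrite (to_nat_nonpos (-z)) by lia. simpl. ring.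
  - rewrite (to_nat_nonpos z) by lia. rewrite Z2Nat.id by lia. simpl. rewrite opp_IZR. ring.
Qed.

Lemma real_approx (y : R) (N : nat) : exists n, Rabs (y - zint n / INR (S N)) <= 1 / INR (S N).
Proof.
  assert (HN : 0 < INR (S N)) by (apply lt_0_INR; lia).
  destruct (archimed (y * INR (S N))) as [A1 A2].
  destruct (zint_surj (up (y * INR (S N)) - 1)) as [n Hn]. exists n. rewrite Hn, minus_IZR.

  replace (y - (IZR (up (y * INR (S N))) - 1) / INR (S N)) with ((y * INR (S N) - IZR (up (y * INR (S N))) + 1) / INR (S N)) by (field; lra).
  rewrite Rabs_div by lra. rewrite (Rabs_pos_eq (INR (S N))) by lra.
  unfold Rdiv. apply Rmult_le_compat_r. left; apply Rinv_0_lt_compat; lra.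
  apply Rabs_le. lra.
Qed.

Lemma Cmod_le_sum (w : C) : Cmod w <= Rabs (fst w) + Rabs (snd w).
Proof.
  destruct w as [a b]. cbn [fst snd].
  replace (a, b) with (Cplus (RtoC a) (Cmult (RtoC b) Ci)) by (unfold Cplus, Cmult, RtoC, Ci; simpl; f_equal; ring).
  eapply Rle_trans. apply Cmod_triangle. rewrite Cmod_mult, Cmod_Ci, !Cmod_R. lra.
Qed.

Lemma gauss_approx (w : C) (N : nat) : exists d, Cmod (Cminus w (gauss N d)) <= 2 / INR (S N).
Proof.
  destruct (real_approx (fst w) N) as [n1 H1]. destruct (real_approx (snd w) N) as [n2 H2].
  exists (Cantor.to_nat (n1, n2)). eapply Rle_trans. apply Cmod_le_sum.
  unfold gauss. rewrite Cantor.cancel_of_to. set (D := INR (S N)) in *. destruct w as [w1 w2].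
  unfold Cminus, Cplus, Copp. simpl. unfold Rdiv in *.
  replace (w1 + - (zint n1 * / D)) with (w1 - zint n1 * / D) by ring.
  replace (w2 + - (zint n2 * / D)) with (w2 - zint n2 * / D) by ring. simpl in H1, H2. lra.
Qed.

Lemma sum_n_rsum (f : nat -> R) Q : sum_n f Q = rsum f (S Q).
Proof. induction Q. rewrite sum_O. simpl. ring. rewrite sum_Sn, IHQ. unfold plus; simpl. ring. Qed.

Lemma rsum_mask (b : nat -> R) Sz Q :
  rsum (fun k => if Nat.ltb k Sz then 0 else b k) Q = rsum b Q - rsum b (Nat.min Q Sz).
Proof.
  induction Q; cbn [rsum]. replace (Nat.min 0 Sz) with 0%nat by lia. cbn [rsum]. ring. rewrite IHQ.
  destruct (Nat.ltb_spec Q Sz).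
  - replace (Nat.min (S Q) Sz) with (S (Nat.min Q Sz)) by lia. cbn [rsum].
    replace (Nat.min Q Sz) with Q by lia. ring.
  - replace (Nat.min (S Q) Sz) with Sz by lia. replace (Nat.min Q Sz) with Sz by lia. ring.
Qed.

Lemma rsum_le_series (b : nat -> R) Q : (forall k, 0 <= b k) -> ex_series b -> rsum b Q <= Series b.
Proof.
  intros Hb Hs. destruct Q. simpl. apply series_nonneg; auto.
  rewrite <- sum_n_rsum. apply sum_n_le_series; auto.
Qed.

Lemma tail_small (b : nat -> R) eps : (forall k, 0 <= b k) -> ex_series b -> 0 < eps ->
  exists Sz, forall Q, rsum (fun k => if Nat.ltb k Sz then 0 else b k) Q <= eps.
Proof.
  intros Hb Hs He. pose proof (Series_correct _ Hs) as Hc.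
  assert (Hl : is_lim_seq (sum_n b) (Series b)) by exact Hc.
  apply is_lim_seq_spec in Hl. destruct (Hl (mkposreal eps He)) as [N0 HN0]. simpl in HN0.
  exists (S N0). intros Q. rewrite rsum_mask.
  destruct (Nat.le_gt_cases Q (S N0)).
  - replace (Nat.min Q (S N0)) with Q by lia. lra.
  - replace (Nat.min Q (S N0)) with (S N0) by lia.
    specialize (HN0 N0 (le_n _)). rewrite sum_n_rsum in HN0. apply Rabs_lt_between in HN0.
    pose proof (rsum_le_series b Q Hb Hs). lra.
Qed.

Lemma nat_large (x : R) : exists N, x < INR N.
Proof.
  destruct (archimed x) as [A1 A2]. destruct (Z.le_gt_cases 0 (up x)).
  - exists (S (Z.to_nat (up x))). rewrite S_INR, INR_IZR_INZ, Z2Nat.id by lia. lra.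
  - exists 0%nat. simpl. assert (IZR (up x) <= -1) by (apply IZR_le; lia). lra.
Qed.

Lemma bernoulli (r : R) n : 1 <= r -> 1 + INR n * (r - 1) <= r ^ n.
Proof.
  intros Hr. induction n. simpl. rewrite Rmult_0_l. lra. rewrite S_INR. simpl.
  assert (0 <= INR n) by apply pos_INR.
  assert (r * (1 + INR n * (r - 1)) <= r * r ^ n) by (apply Rmult_le_compat_l; lra).
  assert (0 <= INR n * ((r - 1) * (r - 1))) by (apply Rmult_le_pos; [lra|nra]).
  nra.
Qed.

Lemma pow_unbounded (r B : R) M : 1 < r -> exists s, (M <= s)%nat /\ B <= r ^ s.
Proof.
  intros Hr. destruct (nat_large (B / (r - 1))) as [N HN].
  exists (M + N)%nat. split. lia. eapply Rle_trans. 2: apply bernoulli; lra.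
  rewrite plus_INR. assert (0 <= INR M) by apply pos_INR.
  assert (B < INR N * (r - 1)). { apply (Rmult_lt_compat_r (r - 1)) in HN; [|lra].
    unfold Rdiv in HN. rewrite Rmult_assoc, Rinv_l, Rmult_1_r in HN by lra. lra. }
  nra.
Qed.

Lemma rsum_ge_term (f : nat -> R) k D : (forall j, 0 <= f j) -> (k < D)%nat -> f k <= rsum f D.
Proof.
  intros Hf Hk. induction D. lia. simpl. destruct (Nat.eq_dec k D).
  subst. pose proof (rsum_nonneg f D Hf). lra. specialize (IHD ltac:(lia)). specialize (Hf D). lra.
Qed.

Lemma lvl_decode Sz N c s :
  let l := Cantor.to_nat (Cantor.to_nat (Sz, Cantor.to_nat (N, c)), s) in
  lvl_s l = s /\ lvl_S l = Sz /\ lvl_N l = N /\ lvl_dig l = c /\ (s <= l)%nat.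
Proof.
  intros l. unfold l, lvl_s, lvl_S, lvl_N, lvl_dig, lvl_code. rewrite !Cantor.cancel_of_to. cbn [fst snd].
  rewrite !Cantor.cancel_of_to. cbn [fst snd]. rewrite !Cantor.cancel_of_to. cbn [fst snd]. repeat split.
  pose proof (Cantor.to_nat_non_decreasing (Cantor.to_nat (Sz, Cantor.to_nat (N, c))) s). lia.
Qed.

Lemma density_gen r (u : cseq) (a : C) Sz eta M : 1 < r -> a <> RtoC 0 -> 0 < eta ->
  exists l, (M <= l)%nat /\
    (forall k, (k < Sz)%nat -> Cmod (Cminus (Cmult a (theta r l k)) (u k)) <= eta) /\
    (forall k, (Sz <= k)%nat -> Cminus (Cmult a (theta r l k)) (u k) = Copp (u k)).
Proof.
  intros Hr Ha He.
  assert (Ha' : 0 < Cmod a) by (apply Cmod_gt_0; auto).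
  destruct (nat_large (2 * Cmod a / eta)) as [N HN].
  assert (HSN : 0 < INR (S N)) by (apply lt_0_INR; lia).
  assert (HN2 : Cmod a * (2 / INR (S N)) <= eta).
  { rewrite S_INR in *. apply (Rmult_lt_compat_r eta) in HN; auto. unfold Rdiv in HN.
    rewrite Rmult_assoc, Rinv_l, Rmult_1_r in HN by lra.
    apply (Rmult_le_reg_r (INR N + 1)); auto. unfold Rdiv. rewrite Rmult_assoc, (Rmult_assoc 2), Rinv_l, Rmult_1_r by lra.
    nra. }
  set (f := fun k => proj1_sig (constructive_indefinite_description _ (gauss_approx (Cdiv (u k) a) N))).
  assert (Hf : forall k, Cmod (Cminus (Cdiv (u k) a) (gauss N (f k))) <= 2 / INR (S N)).
  { intros k. unfold f. destruct (constructive_indefinite_description _ _) as [d Hd]. simpl. exact Hd. }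
  destruct (digit_surj Sz f) as [c Hc].
  destruct (pow_unbounded r (rsum (fun k => Cmod (gauss N (f k))) Sz) M Hr) as [s [Hs1 Hs2]].
  destruct (lvl_decode Sz N c s) as [D1 [D2 [D3 [D4 D5]]]].
  set (l := Cantor.to_nat (Cantor.to_nat (Sz, Cantor.to_nat (N, c)), s)) in *.
  exists l. split; [lia|split].
  - intros k Hk.
    assert (Ht : theta r l k = gauss N (f k)).
    { unfold theta, traw. rewrite D2, D3, D4. destruct (Nat.ltb_spec k Sz); [|lia]. rewrite Hc by auto.
      destruct (Rle_dec _ _) as [h|h]; auto. exfalso. apply h. rewrite D1.
      eapply Rle_trans. 2: exact Hs2. apply (rsum_ge_term (fun k => Cmod (gauss N (f k)))); auto. intros; apply Cmod_ge_0. }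
    rewrite Ht. replace (Cminus (Cmult a (gauss N (f k))) (u k)) with (Copp (Cmult a (Cminus (Cdiv (u k) a) (gauss N (f k))))).
    rewrite Cmod_opp, Cmod_mult. eapply Rle_trans. 2: exact HN2. apply Rmult_le_compat_l. apply Cmod_ge_0. apply Hf.
    field. auto.
  - intros k Hk. rewrite theta_supp by (rewrite D2; auto). ring.
Qed.

Definition approxX (X : seqspace) (v : cseq) (d : R) : Prop :=
  match X with
  | Lp p => ex_series (fun k => powp (Cmod (v k)) p) /\ Series (fun k => powp (Cmod (v k)) p) <= d
  | C0space => forall k, Cmod (v k) <= d
  end.

Lemma rsum_plus (f g : nat -> R) D : rsum (fun j => f j + g j) D = rsum f D + rsum g D.
Proof. induction D; simpl. ring. rewrite IHD. ring. Qed.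

Lemma rsum_ind_eq (eta : R) Sz Q : rsum (fun k => if Nat.ltb k Sz then eta else 0) Q = INR (Nat.min Q Sz) * eta.
Proof.
  induction Q; cbn [rsum]. replace (Nat.min 0 Sz) with 0%nat by lia. simpl. ring.
  rewrite IHQ. destruct (Nat.ltb_spec Q Sz).
  - replace (Nat.min (S Q) Sz) with (S (Nat.min Q Sz)) by lia. rewrite S_INR. ring.
  - replace (Nat.min (S Q) Sz) with (Nat.min Q Sz) by lia. ring.
Qed.

Lemma rsum_ind_le (eta : R) Sz Q : 0 <= eta -> rsum (fun k => if Nat.ltb k Sz then eta else 0) Q <= INR Sz * eta.
Proof.
  intros He. rewrite rsum_ind_eq. apply Rmult_le_compat_r; auto. apply le_INR. lia.
Qed.

Lemma density X r u a d M : valid_space X -> 1 < r -> inX X u -> a <> RtoC 0 -> 0 < d ->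
  exists l, (M <= l)%nat /\ approxX X (fun k => Cminus (Cmult a (theta r l k)) (u k)) d.
Proof.
  intros HX Hr Hu Ha Hd. destruct X as [p|]; simpl in *.
  - destruct (tail_small (fun k => powp (Cmod (u k)) p) (d / 2)) as [Sz HSz]; auto.
    intros; apply powp_nonneg. lra.
    set (eta := Rmin 1 (d / (2 * (INR Sz + 1)))).
    assert (HSp : 0 <= INR Sz) by apply pos_INR.
    assert (Heta : 0 < eta) by (unfold eta; apply Rmin_pos; [lra|apply Rdiv_lt_0_compat; lra]).
    assert (Heta1 : eta <= 1) by apply Rmin_l.
    assert (Heta2 : INR Sz * eta <= d / 2).
    { assert (eta <= d / (2 * (INR Sz + 1))) by apply Rmin_r.
      assert (INR Sz * eta <= INR Sz * (d / (2 * (INR Sz + 1)))) by (apply Rmult_le_compat_l; lra).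
      assert (INR Sz * (d / (2 * (INR Sz + 1))) <= d / 2).
      { unfold Rdiv. rewrite Rinv_mult. assert (0 < / (INR Sz + 1)) by (apply Rinv_0_lt_compat; lra).
        assert (INR Sz * / (INR Sz + 1) <= 1). { apply (Rmult_le_reg_r (INR Sz + 1)). lra. rewrite Rmult_assoc, Rinv_l by lra. lra. }
        assert (0 < d * / 2) by lra. nra. }
      lra. }
    destruct (density_gen r u a Sz eta M Hr Ha Heta) as [l [Hl [H1 H2]]].
    exists l. split; auto.
    set (g := fun k => (if Nat.ltb k Sz then eta else 0) + (if Nat.ltb k Sz then 0 else powp (Cmod (u k)) p)).
    assert (Hg : forall k, 0 <= powp (Cmod (Cminus (Cmult a (theta r l k)) (u k))) p <= g k).
    { intros k. split. apply powp_nonneg. unfold g. destruct (Nat.ltb_spec k Sz).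
      - rewrite Rplus_0_r. eapply Rle_trans. apply powp_le_self; auto. split. apply Cmod_ge_0. specialize (H1 k H). lra. auto.
      - rewrite H2 by auto. rewrite Cmod_opp. lra. }
    destruct (series_le_bound (fun k => powp (Cmod (Cminus (Cmult a (theta r l k)) (u k))) p) d) as [E1 E2].
    + intros; apply powp_nonneg.
    + intros n. rewrite sum_n_rsum. eapply Rle_trans. apply rsum_le. intros j _. apply Hg.
      unfold g. rewrite rsum_plus. pose proof (rsum_ind_le eta Sz (S n) ltac:(lra)). specialize (HSz (S n)). lra.
    + split; auto.
  - apply is_lim_seq_spec in Hu. destruct (Hu (mkposreal d Hd)) as [Sz HSz]. simpl in HSz.
    destruct (density_gen r u a Sz d M Hr Ha Hd) as [l [Hl [H1 H2]]].
    exists l. split; auto. intros k. destruct (Nat.lt_ge_cases k Sz). auto.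
    rewrite H2 by auto. rewrite Cmod_opp. specialize (HSz k H). rewrite Rminus_0_r, Rabs_pos_eq in HSz by apply Cmod_ge_0. lra.
Qed.


Definition hh (K0 K l m : nat) : nat :=
  Cantor.to_nat (l, (lvl_s l * lvl_s l + K0 * (lvl_S l + l + 2 * m + K))%nat).
Definition NN (l m : nat) : nat := (l + m + lvl_s l)%nat.
Definition GG (F : nat -> nat -> nat -> Prop) (K0 K l m n : nat) : Prop :=
  F (hh K0 K l m) m n /\ (NN l m < n)%nat.

Lemma hh_ge K0 K l m : (1 <= K0)%nat -> (l + lvl_s l * lvl_s l + K0 * (lvl_S l + l + 2 * m + K) <= hh K0 K l m)%nat.
Proof. intros. unfold hh. pose proof (Cantor.to_nat_non_decreasing l (lvl_s l * lvl_s l + K0 * (lvl_S l + l + 2 * m + K))). lia. Qed.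

Lemma hh_inj K0 K l l' m m' : hh K0 K l m = hh K0 K l' m' -> l = l'.
Proof. unfold hh. intros H. apply (f_equal Cantor.of_nat) in H. rewrite !Cantor.cancel_of_to in H. congruence. Qed.

Definition Fprops (F : nat -> nat -> nat -> Prop) : Prop :=
  (forall l m l' m', (1 <= l)%nat -> (1 <= m)%nat -> (1 <= l')%nat ->
         (1 <= m')%nat -> (l, m) <> (l', m') ->
         forall n, ~ (F l m n /\ F l' m' n)) /\
  (forall l m l' m' n n', (1 <= l)%nat -> (1 <= m)%nat -> (1 <= l')%nat ->
         (1 <= m')%nat -> F l m n -> F l' m' n' -> (n' > n)%nat ->
         (n' >= n + l)%nat /\ INR n' * INR m / INR m' >= INR (n + l + l')).

Lemma hh_pos K0 K l m : (1 <= K0)%nat -> (1 <= l)%nat -> (1 <= hh K0 K l m)%nat.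
Proof. intros. pose proof (hh_ge K0 K l m H). lia. Qed.

Lemma GG_disj F K0 K l m l' m' n : Fprops F -> (1 <= K0)%nat -> (1 <= l)%nat -> (1 <= m)%nat -> (1 <= l')%nat -> (1 <= m')%nat ->
  GG F K0 K l m n -> GG F K0 K l' m' n -> l = l' /\ m = m'.
Proof.
  intros [HD _] HK0 Hl Hm Hl' Hm' [H1 _] [H2 _].
  destruct (classic ((hh K0 K l m, m) = (hh K0 K l' m', m'))) as [E|E].
  - inversion E. apply hh_inj in H0. auto.
  - exfalso. apply (HD (hh K0 K l m) m (hh K0 K l' m') m' ltac:(auto using hh_pos) Hm ltac:(auto using hh_pos) Hm' E n). auto.
Qed.

Lemma GG_growth F K0 K l m l' m' n n' : Fprops F -> (1 <= K0)%nat -> (1 <= l)%nat -> (1 <= m)%nat -> (1 <= l')%nat -> (1 <= m')%nat ->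
  GG F K0 K l m n -> GG F K0 K l' m' n' -> (n < n')%nat ->
  (n + hh K0 K l m <= n')%nat /\ ((n + hh K0 K l m + hh K0 K l' m') * m' <= n' * m)%nat.
Proof.
  intros [_ HG] HK0 Hl Hm Hl' Hm' [H1 _] [H2 _] Hlt.
  destruct (HG (hh K0 K l m) m (hh K0 K l' m') m' n n') as [A1 A2]; auto using hh_pos.
  split. lia.
  assert (0 < INR m') by (apply lt_0_INR; lia).
  apply Rge_le in A2. apply (Rmult_le_compat_r (INR m')) in A2; [|lra].
  replace (INR n' * INR m / INR m' * INR m') with (INR n' * INR m) in A2 by (field; lra).
  rewrite <- !mult_INR in A2. apply INR_le in A2. exact A2.
Qed.

Lemma croot_ex2 (w : C) m : exists z, (1 <= m)%nat -> Cpow z m = w.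
Proof. destruct (le_lt_dec 1 m). destruct (croot_ex w m l) as [z Hz]. exists z; auto. exists w; intros; lia. Qed.
Definition croot (m : nat) (w : C) : C := proj1_sig (constructive_indefinite_description _ (croot_ex2 w m)).
Lemma croot_spec m w : (1 <= m)%nat -> Cpow (croot m w) m = w.
Proof. unfold croot. destruct (constructive_indefinite_description _ _) as [z Hz]. simpl. auto. Qed.

Definition blk (F : nat -> nat -> nat -> Prop) (K0 K : nat) (t : nat * nat * nat * nat) (q : nat) : Prop :=
  let '(l, m, n, k) := t in
  (1 <= l)%nat /\ (1 <= m)%nat /\ GG F K0 K l m n /\ (k < lvl_S l)%nat /\ q = (n + k)%nat.

Definition tval (lam : C) (t : nat * nat * nat * nat) : C :=
  let '(l, m, n, k) := t in croot m (Cdiv (theta (Cmod lam) l k) (Cpow lam n)).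

Definition xdef (lam : C) (F : nat -> nat -> nat -> Prop) (K0 K : nat) (q : nat) : C :=
  match excluded_middle_informative (exists t, blk F K0 K t q) with
  | left H => tval lam (proj1_sig (constructive_indefinite_description _ H))
  | right _ => RtoC 0
  end.

Lemma blk_ord F K0 K l m n k l' m' n' k' q : Fprops F -> (1 <= K0)%nat ->
  blk F K0 K (l, m, n, k) q -> blk F K0 K (l', m', n', k') q -> (n' < n)%nat -> False.
Proof.
  intros HF HK0 [Hl [Hm [HG [Hk Hq]]]] [Hl' [Hm' [HG' [Hk' Hq']]]] Hlt.
  destruct (GG_growth F K0 K l' m' l m n' n HF HK0 Hl' Hm' Hl Hm HG' HG Hlt) as [A _].
  pose proof (hh_ge K0 K l' m' HK0). nia.
Qed.

Lemma blk_unique F K0 K t t' q : Fprops F -> (1 <= K0)%nat -> blk F K0 K t q -> blk F K0 K t' q -> t = t'.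
Proof.
  intros HF HK0 H1 H2. destruct t as [[[l m] n] k]. destruct t' as [[[l' m'] n'] k'].
  destruct (Nat.lt_total n n') as [h|[h|h]].
  - exfalso. apply (blk_ord F K0 K l' m' n' k' l m n k q); auto.
  - subst n'. pose proof H1 as [Hl [Hm [HG [Hk Hq]]]]. pose proof H2 as [Hl' [Hm' [HG' [Hk' Hq']]]].
    destruct (GG_disj F K0 K l m l' m' n HF HK0 Hl Hm Hl' Hm' HG HG'). subst. f_equal. lia.
  - exfalso. apply (blk_ord F K0 K l m n k l' m' n' k' q); auto.
Qed.

Lemma x_blk lam F K0 K t q : Fprops F -> (1 <= K0)%nat -> blk F K0 K t q -> xdef lam F K0 K q = tval lam t.
Proof.
  intros HF HK0 H. unfold xdef. destruct (excluded_middle_informative _) as [e|e].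
  - destruct (constructive_indefinite_description _ e) as [t' Ht']. simpl. f_equal. eapply blk_unique; eauto.
  - exfalso. apply e. eauto.
Qed.

Lemma x_noblk lam F K0 K q : ~ (exists t, blk F K0 K t q) -> xdef lam F K0 K q = RtoC 0.
Proof. intros H. unfold xdef. destruct (excluded_middle_informative _) as [e|e]; [contradiction|auto]. Qed.

Lemma x_pow lam F K0 K l m n k q : Fprops F -> (1 <= K0)%nat -> Cmod lam > 0 ->
  blk F K0 K (l, m, n, k) q -> Cmult (Cpow lam n) (Cpow (xdef lam F K0 K q) m) = theta (Cmod lam) l k.
Proof.
  intros HF HK0 Hr H. rewrite (x_blk lam F K0 K _ q HF HK0 H). simpl.
  destruct H as [_ [Hm _]]. rewrite croot_spec by auto.
  assert (Hl : lam <> RtoC 0) by (intros E; rewrite E, Cmod_0 in Hr; lra).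
  field. apply Cpow_nz; auto.
Qed.

Lemma x_mod lam F K0 K l m n k q : Fprops F -> (1 <= K0)%nat -> 1 < Cmod lam ->
  blk F K0 K (l, m, n, k) q -> Cmod lam ^ n * Cmod (xdef lam F K0 K q) ^ m <= Cmod lam ^ lvl_s l.
Proof.
  intros HF HK0 Hr H. pose proof (x_pow lam F K0 K l m n k q HF HK0 ltac:(lra) H) as E.
  apply (f_equal Cmod) in E. rewrite Cmod_mult, !Cmod_pow in E. rewrite E. apply theta_bound. lra.
Qed.

Lemma x_le1 lam F K0 K q : Fprops F -> (1 <= K0)%nat -> 1 < Cmod lam -> Cmod (xdef lam F K0 K q) <= 1.
Proof.
  intros HF HK0 Hr. destruct (classic (exists t, blk F K0 K t q)) as [[t Ht]|Hn].
  - destruct t as [[[l m] n] k]. pose proof (x_mod lam F K0 K l m n k q HF HK0 Hr Ht) as B.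
    destruct Ht as [Hl [Hm [[_ HN] _]]]. unfold NN in HN.
    assert (r1 : Cmod lam ^ lvl_s l <= Cmod lam ^ n) by (apply Rle_pow; [lra|lia]).
    assert (Hp : 0 < Cmod lam ^ n) by (apply pow_lt; lra).
    assert (Cmod (xdef lam F K0 K q) ^ m <= 1 ^ m).
    { rewrite pow1. apply (Rmult_le_reg_l (Cmod lam ^ n)); auto. lra. }
    destruct (Rle_dec (Cmod (xdef lam F K0 K q)) 1) as [h|h]; auto. exfalso.
    assert (1 ^ m < Cmod (xdef lam F K0 K q) ^ m) by (apply Rlt_pow_R1 || (rewrite pow1; apply Rlt_pow_R1; [lra|lia])).
    lra.
  - rewrite x_noblk by auto. rewrite Cmod_0. lra.
Qed.

Lemma rsum_ext_R (f g : nat -> R) D : (forall j, f j = g j) -> rsum f D = rsum g D.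
Proof. intros H. induction D; simpl; auto. rewrite IHD, H. auto. Qed.

Definition rho (K m : nat) : R := 1 - / (INR K * INR m).

Lemma bern_down (x : R) n : 0 <= x <= 1 -> 1 - INR n * x <= (1 - x) ^ n.
Proof.
  intros Hx. induction n. simpl. lra. rewrite S_INR. simpl.
  assert (0 <= INR n) by apply pos_INR.
  destruct (Rle_dec 0 (1 - INR n * x)).
  - assert ((1 - x) * (1 - INR n * x) <= (1 - x) * (1 - x) ^ n) by (apply Rmult_le_compat_l; lra).
    assert (0 <= INR n * x * x) by (apply Rmult_le_pos; [apply Rmult_le_pos|]; lra). nra.
  - assert (0 <= (1 - x) * (1 - x) ^ n) by (apply Rmult_le_pos; [lra|apply pow_le; lra]). nra.
Qed.

Lemma rho_props K m r : (2 <= K)%nat -> (1 <= m)%nat -> 1 < r -> / r <= 1 - / INR K ->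
  1/2 <= rho K m /\ rho K m < 1 /\ / r <= rho K m ^ m /\ / (1 - rho K m) = INR K * INR m.
Proof.
  intros HK Hm Hr HKr.
  assert (HK' : 2 <= INR K) by (replace 2 with (INR 2) by (simpl; ring); apply le_INR; lia).
  assert (Hm' : 1 <= INR m) by (replace 1 with (INR 1) by (simpl; ring); apply le_INR; lia).
  assert (HKm : 2 <= INR K * INR m) by nra.
  assert (Hi : 0 < / (INR K * INR m) <= 1/2).
  { split. apply Rinv_0_lt_compat; lra. apply Rle_trans with (/ 2). apply Rinv_le_contravar; lra. lra. }
  unfold rho. repeat split; try lra.
  - eapply Rle_trans. exact HKr.
    eapply Rle_trans. 2: apply bern_down; lra.
    replace (INR m * / (INR K * INR m)) with (/ INR K) by (field; lra). lra.
  - replace (1 - (1 - / (INR K * INR m))) with (/ (INR K * INR m)) by ring. rewrite Rinv_inv. reflexivity.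
Qed.

Lemma geom_sum (p : R) N : 0 <= p < 1 -> rsum (fun i => p ^ i) N <= / (1 - p).
Proof.
  intros Hp. assert (E : rsum (fun i => p ^ i) N * (1 - p) = 1 - p ^ N).
  { induction N; simpl. ring. rewrite Rmult_plus_distr_r, IHN. ring. }
  assert (0 <= p ^ N) by (apply pow_le; lra).
  apply (Rmult_le_reg_r (1 - p)). lra. rewrite E, Rinv_l by lra. lra.
Qed.

Lemma geom_shift (p : R) d Q : rsum (fun k => if Nat.leb d k then p ^ (k - d) else 0) Q = rsum (fun i => p ^ i) (Q - d).
Proof.
  induction Q; cbn [rsum]. reflexivity.
  rewrite IHQ. destruct (Nat.leb_spec d Q).
  - replace (S Q - d)%nat with (S (Q - d)) by lia. cbn [rsum]. reflexivity.
  - replace (S Q - d)%nat with (Q - d)%nat by lia. ring.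
Qed.

Lemma geom_gen (p : R) n z Q : 0 <= p < 1 ->
  rsum (fun k => if Nat.leb z (n + k) then p ^ (n + k - z) else 0) Q <= / (1 - p).
Proof.
  intros Hp. destruct (Nat.le_gt_cases z n).
  - eapply Rle_trans. 2: apply (geom_sum p Q Hp). apply rsum_le. intros k _.
    destruct (Nat.leb_spec z (n + k)); [|lia]. apply pow_le_exp_dec. lra. lia.
  -     replace (rsum (fun k => if Nat.leb z (n + k) then p ^ (n + k - z) else 0) Q)
      with (rsum (fun k => if Nat.leb (z - n) k then p ^ (k - (z - n)) else 0) Q).
    rewrite geom_shift. apply geom_sum; auto.
    apply rsum_ext_R. intros k. destruct (Nat.leb_spec (z - n) k), (Nat.leb_spec z (n + k)); try lia; auto.
    f_equal. lia.
Qed.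



Lemma pow_strict a b m : (0 < m)%nat -> 0 <= a -> a < b -> a ^ m < b ^ m.
Proof.
  intros Hm Ha Hab. induction m. lia. destruct m. simpl; lra.
  specialize (IHm ltac:(lia)). simpl in *.
  assert (0 <= a * a ^ m) by (apply Rmult_le_pos; [lra|apply pow_le; lra]). nra.
Qed.

Lemma pow_le_base a b m : (0 < m)%nat -> 0 <= a -> 0 <= b -> a ^ m <= b ^ m -> a <= b.
Proof.
  intros Hm Ha Hb H. destruct (Rle_dec a b); auto. exfalso.
  assert (b ^ m < a ^ m) by (apply pow_strict; auto; lra). lra.
Qed.

Lemma core_ineq (r p a : R) (n m m' n' z s' h h' : nat) :
  1 < r -> 0 < p <= 1 -> / r <= p ^ m' -> (1 <= m)%nat -> (1 <= m')%nat -> 0 <= a ->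
  r ^ n' * a ^ m' <= r ^ s' -> ((n + h + h') * m' <= z * m)%nat -> (z <= n')%nat ->
  r ^ n * a ^ m <= r ^ (s' * m) * / r ^ (h + h') * p ^ (n' - z).
Proof.
  intros Hr Hp Hpm Hm Hm' Ha H1 H2 H3.
  set (j := (n' - z)%nat).
  assert (Hpos : forall e, 0 < r ^ e) by (intros; apply pow_lt; lra).
  assert (S1 : a ^ (m * m') * r ^ (n' * m) <= r ^ (s' * m)).
  { assert (T : (r ^ n' * a ^ m') ^ m <= (r ^ s') ^ m).
    { apply pow_incr. split; auto. apply Rmult_le_pos. left; auto. apply pow_le; auto. }
    rewrite Rpow_mult_distr, <- !pow_mult in T. replace (m * m')%nat with (m' * m)%nat by lia. lra. }
  assert (S2 : r ^ (n * m') * r ^ ((h + h') * m') * r ^ j <= r ^ (n' * m)).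
  { rewrite <- !pow_add. apply Rle_pow. lra. unfold j. nia. }
  assert (Hv : (r ^ n * a ^ m) ^ m' * (r ^ ((h + h') * m') * r ^ j) <= r ^ (s' * m)).
  { rewrite Rpow_mult_distr, <- !pow_mult. replace (m * m')%nat with (m * m')%nat by lia.
    assert (0 <= a ^ (m * m')) by (apply pow_le; auto).
    replace (r ^ (n * m') * a ^ (m * m') * (r ^ ((h + h') * m') * r ^ j))
      with (a ^ (m * m') * (r ^ (n * m') * r ^ ((h + h') * m') * r ^ j)) by ring.
    eapply Rle_trans. 2: exact S1. apply Rmult_le_compat_l; auto. }
  set (c := r ^ (s' * m) * / r ^ (h + h')).
  assert (Hc : 0 < c) by (unfold c; apply Rmult_lt_0_compat; [auto|apply Rinv_0_lt_compat; auto]).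
  assert (Hw : r ^ (s' * m) <= (c * p ^ j) ^ m' * (r ^ ((h + h') * m') * r ^ j)).
  { assert (A0 : (c * p ^ j) ^ m' = c ^ m' * (p ^ m') ^ j).
    { rewrite Rpow_mult_distr, <- !pow_mult. f_equal. f_equal. lia. }
    rewrite A0.
    assert (A1 : (/ r) ^ j <= (p ^ m') ^ j) by (apply pow_incr; split; [left; apply Rinv_0_lt_compat; lra|auto]).
    assert (A2 : c ^ m' * r ^ ((h + h') * m') = r ^ (s' * m * m')).
    { unfold c. rewrite Rpow_mult_distr, <- pow_mult, pow_inv, <- pow_mult. field. apply Rgt_not_eq, Hpos. }
    assert (A3 : (/ r) ^ j * r ^ j = 1) by (rewrite pow_inv; field; apply Rgt_not_eq, Hpos).
    assert (A4 : r ^ (s' * m) <= r ^ (s' * m * m')) by (apply Rle_pow; [lra|nia]).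
    assert (A5 : 0 <= c ^ m') by (apply pow_le; lra).
    assert (A6 : c ^ m' * (/ r) ^ j * (r ^ ((h + h') * m') * r ^ j) = r ^ (s' * m * m')).
    { replace (c ^ m' * (/ r) ^ j * (r ^ ((h + h') * m') * r ^ j)) with ((c ^ m' * r ^ ((h + h') * m')) * ((/ r) ^ j * r ^ j)) by ring.
      rewrite A2, A3. ring. }
    assert (A7 : c ^ m' * (/ r) ^ j * (r ^ ((h + h') * m') * r ^ j) <= c ^ m' * (p ^ m') ^ j * (r ^ ((h + h') * m') * r ^ j)).
    { apply Rmult_le_compat_r. left; apply Rmult_lt_0_compat; auto. apply Rmult_le_compat_l; auto. }
    lra. }
  apply (pow_le_base _ _ m'). lia. apply Rmult_le_pos; [left; auto|apply pow_le; auto].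
  apply Rmult_le_pos; [left; auto|apply pow_le; lra].
  assert (Hq : 0 < r ^ ((h + h') * m') * r ^ j) by (apply Rmult_lt_0_compat; auto).
  apply (Rmult_le_reg_r (r ^ ((h + h') * m') * r ^ j)); auto. lra.
Qed.

Lemma least_ex (P : nat -> Prop) : exists z, (exists k, P k) -> P z /\ forall k, P k -> (z <= k)%nat.
Proof.
  destruct (classic (exists k, P k)) as [H|H].
  - destruct (dec_inh_nat_subset_has_unique_least_element P (fun n => classic (P n)) H) as [z [[Hz Hmin] _]].
    exists z; auto.
  - exists 0%nat; intros; contradiction.
Qed.
Definition zmin (P : nat -> Prop) : nat := proj1_sig (constructive_indefinite_description _ (least_ex P)).
Lemma zmin_spec P : (exists k, P k) -> P (zmin P) /\ forall k, P k -> (zmin P <= k)%nat.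
Proof. unfold zmin. destruct (constructive_indefinite_description _ _) as [z Hz]. simpl. auto. Qed.

Lemma pow2_ge n : INR n <= 2 ^ n.
Proof. induction n. simpl; lra. rewrite S_INR. simpl. assert (1 <= 2 ^ n) by (apply pow_R1_Rle; lra). lra. Qed.

Lemma rsum_swap (f : nat -> nat -> R) A B :
  rsum (fun i => rsum (fun j => f i j) B) A = rsum (fun j => rsum (fun i => f i j) A) B.
Proof.
  induction A; cbn [rsum].
  - induction B; cbn [rsum]; auto. rewrite <- IHB. ring.
  - rewrite IHA. rewrite <- rsum_plus. reflexivity.
Qed.

Lemma rsum_scal_l (f : nat -> R) a D : rsum (fun j => a * f j) D = a * rsum f D.
Proof. induction D; simpl. ring. rewrite IHD. ring. Qed.

Lemma half_sum D : rsum (fun j => (1/2) ^ j) D <= 2.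
Proof. eapply Rle_trans. apply geom_sum. lra. lra. Qed.

Lemma double_half A B : rsum (fun i => rsum (fun j => (1/2) ^ i * (1/2) ^ j) B) A <= 4.
Proof.
  eapply Rle_trans. apply rsum_le. intros i _. rewrite rsum_scal_l.
  apply Rmult_le_compat_l. apply pow_le; lra. apply half_sum.
  rewrite rsum_scal. replace 4 with (2 * 2) by ring. apply Rmult_le_compat_r. lra. apply half_sum.
Qed.

Definition PH (lam : C) (F : nat -> nat -> nat -> Prop) (K0 K : nat) : Prop :=
  Fprops F /\ (1 <= K0)%nat /\ 2 <= Cmod lam ^ K0 /\ (2 <= K)%nat /\ / Cmod lam <= 1 - / INR K /\ 1 < Cmod lam.

Definition zf (F : nat -> nat -> nat -> Prop) (K0 K n l' m' : nat) : nat :=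
  zmin (fun n' => GG F K0 K l' m' n' /\ (n < n')%nat).

Definition gfun (r : R) (F : nat -> nat -> nat -> Prop) (K0 K n l' m' q : nat) : R :=
  if (Nat.leb 1 l' && Nat.leb 1 m' && Nat.leb (zf F K0 K n l' m') q)%bool then
    r ^ (lvl_s l' * lvl_s l') * / r ^ (hh K0 K l' m') * 2 ^ (lvl_S l') * rho K m' ^ (q - zf F K0 K n l' m')
  else 0.

Lemma gfun_nonneg lam F K0 K n l' m' q : PH lam F K0 K -> 0 <= gfun (Cmod lam) F K0 K n l' m' q.
Proof.
  intros [HF [HK0 [Hr0 [HK [HKr Hr]]]]]. unfold gfun.
  destruct (Nat.leb_spec 1 l'), (Nat.leb_spec 1 m'), (Nat.leb_spec (zf F K0 K n l' m') q); simpl; try lra.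
  destruct (rho_props K m' (Cmod lam) HK H0 Hr HKr) as [R1 _].
  repeat apply Rmult_le_pos; try apply pow_le; try lra.
  left; apply Rinv_0_lt_compat, pow_lt; lra.
Qed.

Lemma stepB lam F K0 K n l' m' Q : PH lam F K0 K ->
  rsum (fun k => gfun (Cmod lam) F K0 K n l' m' (n + k)) Q <= (1/2) ^ l' * (1/2) ^ m'.
Proof.
  intros PHs. pose proof PHs as [HF [HK0 [Hr0 [HK [HKr Hr]]]]].
  set (r := Cmod lam) in *.
  assert (Hhalf : 0 <= (1/2) ^ l' * (1/2) ^ m') by (apply Rmult_le_pos; apply pow_le; lra).
  destruct (Nat.leb_spec 1 l') as [Hl'|Hl']; [destruct (Nat.leb_spec 1 m') as [Hm'|Hm']|].
  2,3: rewrite (rsum_ext_R _ (fun _ => 0)); [ |intros k; unfold gfun;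
         destruct (Nat.leb_spec 1 l'), (Nat.leb_spec 1 m'); simpl; auto; lia];
       assert (rsum (fun _ => 0) Q = 0) by (clear; induction Q; simpl; lra); lra.
  set (z := zf F K0 K n l' m').
  set (Ct := r ^ (lvl_s l' * lvl_s l') * / r ^ (hh K0 K l' m') * 2 ^ (lvl_S l')).
  destruct (rho_props K m' r HK Hm' Hr HKr) as [R1 [R2 [R3 R4]]].
  rewrite (rsum_ext_R _ (fun k => Ct * (if Nat.leb z (n + k) then rho K m' ^ (n + k - z) else 0))).
  2: { intros k. unfold gfun. fold z. destruct (Nat.leb_spec 1 l'), (Nat.leb_spec 1 m'); try lia.
       destruct (Nat.leb_spec z (n + k)); simpl; unfold Ct; ring. }
  rewrite rsum_scal_l.
  assert (HCt : 0 <= Ct) by (unfold Ct; repeat apply Rmult_le_pos; try apply pow_le; try lra;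
                              left; apply Rinv_0_lt_compat, pow_lt; lra).
  eapply Rle_trans. apply Rmult_le_compat_l. exact HCt. apply geom_gen. lra.
  rewrite R4.
  set (s := lvl_s l'). set (L := lvl_S l'). set (h := hh K0 K l' m').
  set (E := (L + l' + 2 * m' + K)%nat).
  assert (Hh : (s * s + K0 * E <= h)%nat) by (pose proof (hh_ge K0 K l' m' HK0); unfold h, E, s, L; lia).
  assert (Hpos : forall e, 0 < r ^ e) by (intros; apply pow_lt; lra).
  assert (P1 : r ^ (s * s) * 2 ^ E <= r ^ h).
  { eapply Rle_trans. 2: apply Rle_pow; [lra|exact Hh]. rewrite pow_add, (pow_mult r K0 E).
    apply Rmult_le_compat_l. left; auto. apply pow_incr. lra. }
  assert (P2 : 2 ^ L * 2 ^ l' * 2 ^ m' * (INR m' * INR K) <= 2 ^ E).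
  { unfold E. rewrite !pow_add. replace (2 * m')%nat with (m' + m')%nat by lia. rewrite pow_add.
    pose proof (pow2_ge m'). pose proof (pow2_ge K).
    assert (0 <= INR m') by apply pos_INR. assert (0 <= INR K) by apply pos_INR.
    assert (0 < 2 ^ L * 2 ^ l' * 2 ^ m') by (repeat apply Rmult_lt_0_compat; apply pow_lt; lra).
    assert (INR m' * INR K <= 2 ^ m' * 2 ^ K) by (apply Rmult_le_compat; auto).
    nra. }
  unfold Ct. fold s L h.
  assert (Hinv : (1/2) ^ l' * (1/2) ^ m' = / (2 ^ l' * 2 ^ m')).
  { rewrite Rinv_mult, <- !pow_inv. f_equal; f_equal; lra. }
  rewrite Hinv.
  assert (0 < 2 ^ l' * 2 ^ m') by (apply Rmult_lt_0_compat; apply pow_lt; lra).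
  apply (Rmult_le_reg_r (2 ^ l' * 2 ^ m' * r ^ h)). apply Rmult_lt_0_compat; auto.
  assert (N1 : 2 ^ l' <> 0) by (apply pow_nonzero; lra).
  assert (N2 : 2 ^ m' <> 0) by (apply pow_nonzero; lra).
  assert (N3 : r ^ h <> 0) by (apply Rgt_not_eq, Hpos).
  replace (/ (2 ^ l' * 2 ^ m') * (2 ^ l' * 2 ^ m' * r ^ h)) with (r ^ h) by (field; auto).
  replace (r ^ (s * s) * / r ^ h * 2 ^ L * (INR K * INR m') * (2 ^ l' * 2 ^ m' * r ^ h))
    with (r ^ (s * s) * (2 ^ L * 2 ^ l' * 2 ^ m' * (INR m' * INR K))) by (field; auto).
  eapply Rle_trans. 2: exact P1. apply Rmult_le_compat_l. left; auto. exact P2.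
Qed.

Lemma blk_after lam F K0 K l m n k l' m' n' k' : PH lam F K0 K -> (1 <= l)%nat -> (1 <= m)%nat -> GG F K0 K l m n ->
  (lvl_S l <= k)%nat -> blk F K0 K (l', m', n', k') (n + k) -> (n < n')%nat.
Proof.
  intros [HF [HK0 _]] Hl Hm HG Hk Hb. pose proof Hb as [Hl' [Hm' [HG' [Hk' Hq]]]].
  destruct (Nat.lt_total n n') as [h|[h|h]]; auto; exfalso.
  - subst n'. destruct (GG_disj F K0 K l m l' m' n HF HK0 Hl Hm Hl' Hm' HG HG'). subst. lia.
  - destruct (GG_growth F K0 K l' m' l m n' n HF HK0 Hl' Hm' Hl Hm HG' HG h) as [A _].
    pose proof (hh_ge K0 K l' m' HK0). nia.
Qed.

Lemma stepA lam F K0 K l m n k Q : PH lam F K0 K -> (1 <= l)%nat -> (1 <= m)%nat -> GG F K0 K l m n ->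
  (k < Q)%nat -> (lvl_S l <= k)%nat ->
  Cmod lam ^ n * Cmod (xdef lam F K0 K (n + k)) ^ m <=
  (Cmod lam ^ (m * m) * / Cmod lam ^ (hh K0 K l m)) *
  rsum (fun l' => rsum (fun m' => gfun (Cmod lam) F K0 K n l' m' (n + k)) (n + Q)) (n + Q).
Proof.
  intros PHs Hl Hm HG HkQ Hk. pose proof PHs as [HF [HK0 [Hr0 [HK [HKr Hr]]]]].
  set (r := Cmod lam) in *. set (q := (n + k)%nat).
  assert (Hpos : forall e, 0 < r ^ e) by (intros; apply pow_lt; lra).
  assert (HW : 0 < r ^ (m * m) * / r ^ (hh K0 K l m)) by (apply Rmult_lt_0_compat; auto; apply Rinv_0_lt_compat; auto).
  assert (Hg0 : forall l' m', 0 <= gfun r F K0 K n l' m' q) by (intros; apply gfun_nonneg; auto).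
  assert (Hs0 : forall l', 0 <= rsum (fun m' => gfun r F K0 K n l' m' q) (n + Q)) by (intros; apply rsum_nonneg; auto).
  destruct (classic (exists t, blk F K0 K t q)) as [[t Ht]|Hn].
  2: { rewrite x_noblk by auto. rewrite Cmod_0, pow_i by lia. rewrite Rmult_0_r.
       apply Rmult_le_pos. lra. apply rsum_nonneg; auto. }
  destruct t as [[[l' m'] n'] k'].
  pose proof (blk_after lam F K0 K l m n k l' m' n' k' PHs Hl Hm HG Hk Ht) as Hnn'.
  pose proof Ht as [Hl' [Hm' [HG' [Hk' Hq]]]].
  assert (Hbounds : (l' < n + Q)%nat /\ (m' < n + Q)%nat) by (destruct HG' as [_ HN]; unfold NN in HN; unfold q in Hq; lia).
  set (z := zf F K0 K n l' m').
  destruct (zmin_spec (fun n'' => GG F K0 K l' m' n'' /\ (n < n'')%nat)) as [[HGz Hnz] Hzmin].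
  { exists n'. auto. }
  fold (zf F K0 K n l' m') z in HGz, Hnz, Hzmin.
  specialize (Hzmin n' (conj HG' Hnn')).
  destruct (GG_growth F K0 K l m l' m' n z HF HK0 Hl Hm Hl' Hm' HG HGz Hnz) as [_ Hgr].
  pose proof (x_mod lam F K0 K l' m' n' k' q HF HK0 Hr Ht) as Hxm. fold r in Hxm.
  destruct (rho_props K m' r HK Hm' Hr HKr) as [R1 [R2 [R3 R4]]].
  set (a := Cmod (xdef lam F K0 K q)).
  set (h := hh K0 K l m). set (h' := hh K0 K l' m'). set (s' := lvl_s l'). set (L' := lvl_S l').
  pose proof (core_ineq r (rho K m') a n m m' n' z s' h h' Hr ltac:(lra) R3 Hm Hm' (Cmod_ge_0 _) Hxm Hgr Hzmin) as C1.
  assert (C2 : rho K m' ^ (n' - z) <= 2 ^ L' * rho K m' ^ (q - z)).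
  { replace (q - z)%nat with ((n' - z) + k')%nat by lia. rewrite pow_add.
    assert (T1 : (1/2) ^ L' <= rho K m' ^ k').
    { eapply Rle_trans. apply pow_le_exp_dec. lra. apply Nat.lt_le_incl; exact Hk'.
      apply pow_incr. lra. }
    assert (T2 : 2 ^ L' * (1/2) ^ L' = 1) by (rewrite <- Rpow_mult_distr; replace (2 * (1/2)) with 1 by field; apply pow1).
    assert (0 <= rho K m' ^ (n' - z)) by (apply pow_le; lra).
    assert (0 < 2 ^ L') by (apply pow_lt; lra).
    assert (2 ^ L' * (1/2) ^ L' <= 2 ^ L' * rho K m' ^ k') by (apply Rmult_le_compat_l; lra).
    nra. }
  assert (C3 : r ^ (s' * m) <= r ^ (m * m) * r ^ (s' * s')).
  { rewrite <- pow_add. apply Rle_pow. lra. nia. }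
  assert (C4 : / r ^ (h + h') = / r ^ h * / r ^ h').
  { rewrite pow_add, Rinv_mult. reflexivity. }
  assert (Hgq : gfun r F K0 K n l' m' q = r ^ (s' * s') * / r ^ h' * 2 ^ L' * rho K m' ^ (q - z)).
  { unfold gfun. fold z. destruct (Nat.leb_spec 1 l'), (Nat.leb_spec 1 m'), (Nat.leb_spec z q); try lia. reflexivity. }
  assert (Main : r ^ n * a ^ m <= (r ^ (m * m) * / r ^ h) * gfun r F K0 K n l' m' q).
  { rewrite Hgq. eapply Rle_trans. exact C1. rewrite C4.
    assert (0 < / r ^ h) by (apply Rinv_0_lt_compat; auto).
    assert (0 < / r ^ h') by (apply Rinv_0_lt_compat; auto).
    assert (0 <= rho K m' ^ (n' - z)) by (apply pow_le; lra).
    assert (E1 : r ^ (s' * m) * (/ r ^ h * / r ^ h') * rho K m' ^ (n' - z) <=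
                 (r ^ (m * m) * r ^ (s' * s')) * (/ r ^ h * / r ^ h') * (2 ^ L' * rho K m' ^ (q - z))).
    { apply Rmult_le_compat. apply Rmult_le_pos. left; auto. left; apply Rmult_lt_0_compat; auto.
      auto. apply Rmult_le_compat_r. left; apply Rmult_lt_0_compat; auto. exact C3. exact C2. }
    eapply Rle_trans. exact E1. right. ring. }
  eapply Rle_trans. exact Main. apply Rmult_le_compat_l. left; unfold h; exact HW.
  eapply Rle_trans. 2: apply (rsum_ge_term (fun l'' => rsum (fun m'' => gfun r F K0 K n l'' m'' q) (n + Q)) l'); auto; try lia.
  apply (rsum_ge_term (fun m'' => gfun r F K0 K n l' m'' q) m'); auto; lia.
Qed.

Lemma KL lam F K0 K l m n Q : PH lam F K0 K -> (1 <= l)%nat -> (1 <= m)%nat -> GG F K0 K l m n ->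
  rsum (fun k => if Nat.leb (lvl_S l) k then Cmod lam ^ n * Cmod (xdef lam F K0 K (n + k)) ^ m else 0) Q
  <= 4 * (Cmod lam ^ (m * m) * / Cmod lam ^ (hh K0 K l m)).
Proof.
  intros PHs Hl Hm HG. pose proof PHs as [HF [HK0 [Hr0 [HK [HKr Hr]]]]].
  set (r := Cmod lam) in *.
  set (W := r ^ (m * m) * / r ^ (hh K0 K l m)).
  assert (HW : 0 < W) by (unfold W; apply Rmult_lt_0_compat; [apply pow_lt; lra|apply Rinv_0_lt_compat, pow_lt; lra]).
  set (G3 := fun k l' m' => gfun r F K0 K n l' m' (n + k)).
  assert (Hg0 : forall k l' m', 0 <= G3 k l' m') by (intros; apply gfun_nonneg; auto).
  eapply Rle_trans.
  - apply (rsum_le _ (fun k => W * rsum (fun l' => rsum (fun m' => G3 k l' m') (n + Q)) (n + Q))).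
    intros k Hk. destruct (Nat.leb_spec (lvl_S l) k).
    + apply stepA; auto.
    + apply Rmult_le_pos. lra. apply rsum_nonneg. intros; apply rsum_nonneg; auto.
  - rewrite rsum_scal_l. rewrite Rmult_comm. apply Rmult_le_compat_r. lra.
    rewrite rsum_swap.
    rewrite (rsum_ext_R _ (fun l' => rsum (fun m' => rsum (fun k => G3 k l' m') Q) (n + Q))).
    2: { intros l'. apply rsum_swap. }
    eapply Rle_trans. 2: apply (double_half (n + Q) (n + Q)).
    apply rsum_le. intros l' _. apply rsum_le. intros m' _. apply stepB; auto.
Qed.


Lemma PH_exists lam F : Fprops F -> 1 < Cmod lam -> exists K0 K, PH lam F K0 K.
Proof.
  intros HF Hr. set (r := Cmod lam) in *.
  destruct (pow_unbounded r 2 1 Hr) as [K0 [HK0 HK0']].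
  destruct (nat_large (r / (r - 1))) as [N HN].
  exists K0, (Nat.max N 2). unfold PH. fold r. split; [exact HF|]. split; [lia|]. split; [exact HK0'|]. split; [lia|]. split; [|exact Hr].
  assert (HK : INR N <= INR (Nat.max N 2)) by (apply le_INR; lia).
  assert (HK2 : 2 <= INR (Nat.max N 2)) by (replace 2 with (INR 2) by (simpl; ring); apply le_INR; lia).
  assert (r / (r - 1) < INR (Nat.max N 2)) by lra.
  assert (/ INR (Nat.max N 2) < (r - 1) / r).
  { replace ((r - 1) / r) with (/ (r / (r - 1))) by (field; lra).
    apply Rinv_lt_contravar. apply Rmult_lt_0_compat. apply Rdiv_lt_0_compat; lra. lra. lra. }
  assert ((r - 1) / r = 1 - / r) by (field; lra). lra.
Qed.

Lemma A_nonempty (A : (nat -> Prop) -> Prop) S : furstenberg A -> A S -> exists n, S n.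
Proof.
  intros [_ [H0 Hup]] HS. apply NNPP. intros Hn. apply H0. apply (Hup S); auto.
  intros n Hs. apply Hn. eauto.
Qed.

Lemma A_GG (A : (nat -> Prop) -> Prop) F K0 K l m :
  finitely_invariant A -> (forall l m, (1 <= l)%nat -> (1 <= m)%nat -> A (F l m)) -> (1 <= K0)%nat ->
  (1 <= l)%nat -> (1 <= m)%nat -> A (GG F K0 K l m).
Proof.
  intros HAi HA HK0 Hl Hm. apply (HAi (F (hh K0 K l m) m)). apply HA; auto. apply hh_pos; auto.
Qed.

Lemma rsum_split (f : nat -> R) a b : rsum f (a + b) = rsum f a + rsum (fun k => f (a + k)%nat) b.
Proof. induction b. simpl. replace (a + 0)%nat with a by lia. ring. replace (a + S b)%nat with (S (a + b)) by lia.
  simpl. rewrite IHb. ring. Qed.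

Lemma rsum_mono_D (f : nat -> R) D D' : (forall j, 0 <= f j) -> (D <= D')%nat -> rsum f D <= rsum f D'.
Proof. intros H Hle. induction Hle. lra. simpl. specialize (H m). lra. Qed.

Lemma rsum_const_le (c : R) D : rsum (fun _ => c) D = INR D * c.
Proof. induction D; simpl. ring. rewrite IHD. destruct D; simpl; ring. Qed.

Lemma x_l1 lam F K0 K A : PH lam F K0 K -> furstenberg A -> finitely_invariant A ->
  (forall l m, (1 <= l)%nat -> (1 <= m)%nat -> A (F l m)) ->
  ex_series (fun q => Cmod (xdef lam F K0 K q)).
Proof.
  intros PHs HA HAi HF1. pose proof PHs as [HF [HK0 [Hr0 [HK [HKr Hr]]]]].
  set (r := Cmod lam) in *. set (x := xdef lam F K0 K).
  destruct (A_nonempty A _ HA (A_GG A F K0 K 1 1 HAi HF1 HK0 (le_n 1) (le_n 1))) as [n0 Hn0].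
  set (L1 := lvl_S 1).
  set (B0 := 4 * (r ^ (1 * 1) * / r ^ (hh K0 K 1 1))).
  assert (Hrn : 0 < r ^ n0) by (apply pow_lt; lra).
  assert (Hx1 : forall q, Cmod (x q) <= 1) by (intros; apply x_le1; auto).
  apply (series_le_bound _ (INR n0 + INR L1 + B0 / r ^ n0)).
  intros; apply Cmod_ge_0.
  intros Q. rewrite sum_n_rsum. eapply Rle_trans. apply (rsum_mono_D _ _ (n0 + S Q)). intros; apply Cmod_ge_0. lia.
  rewrite rsum_split.
  assert (P1 : rsum (fun q => Cmod (x q)) n0 <= INR n0).
  { rewrite <- (Rmult_1_r (INR n0)), <- rsum_const_le. apply rsum_le. intros; auto. }
  assert (P2 : rsum (fun k => Cmod (x (n0 + k)%nat)) (S Q) <=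
     rsum (fun k => (if Nat.ltb k L1 then 1 else 0) + / r ^ n0 * (if Nat.leb L1 k then r ^ n0 * Cmod (x (n0 + k)%nat) ^ 1 else 0)) (S Q)).
  { apply rsum_le. intros k _. destruct (Nat.ltb_spec k L1), (Nat.leb_spec L1 k); try lia.
    - specialize (Hx1 (n0 + k)%nat). lra.
    - rewrite pow_1. field_simplify; lra. }
  rewrite rsum_plus, rsum_ind_eq, rsum_scal_l in P2.
  pose proof (KL lam F K0 K 1 1 n0 (S Q) PHs (le_n 1) (le_n 1) Hn0) as P3. fold r x L1 B0 in P3.
  assert (INR (Nat.min (S Q) L1) <= INR L1) by (apply le_INR; lia).
  assert (0 < / r ^ n0) by (apply Rinv_0_lt_compat; auto).
  assert (/ r ^ n0 * rsum (fun k => if Nat.leb L1 k then r ^ n0 * Cmod (x (n0 + k)%nat) ^ 1 else 0) (S Q) <= / r ^ n0 * B0)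
    by (apply Rmult_le_compat_l; lra).
  unfold Rdiv. rewrite (Rmult_comm B0). lra.
Qed.

Lemma x_nonzero lam F K0 K A : PH lam F K0 K -> furstenberg A -> finitely_invariant A ->
  (forall l m, (1 <= l)%nat -> (1 <= m)%nat -> A (F l m)) -> xdef lam F K0 K <> czero.
Proof.
  intros PHs HA HAi HF1. pose proof PHs as [HF [HK0 [Hr0 [HK [HKr Hr]]]]].
  set (d := Cantor.to_nat (Cantor.to_nat (1, 0), Cantor.to_nat (0, 0))%nat).
  set (c := Cantor.to_nat (d, 0%nat)).
  destruct (lvl_decode 1 0 c 0) as [D1 [D2 [D3 [D4 _]]]].
  set (l1 := Cantor.to_nat (Cantor.to_nat (1, Cantor.to_nat (0, c)), 0)%nat) in *.
  assert (Hl1 : (1 <= l1)%nat).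
  { unfold l1. pose proof (Cantor.to_nat_non_decreasing (Cantor.to_nat (1%nat, Cantor.to_nat (0%nat, c))) 0%nat).
    pose proof (Cantor.to_nat_non_decreasing 1%nat (Cantor.to_nat (0%nat, c))). lia. }
  assert (Ht : theta (Cmod lam) l1 0 = RtoC 1).
  { assert (Tr : traw l1 0 = RtoC 1).
    { unfold traw. rewrite D2, D3, D4. simpl Nat.ltb. cbv iota.
      unfold digit. change (Nat.iter 0 ?g ?cc) with cc. unfold c. rewrite Cantor.cancel_of_to. cbn [fst].
      unfold gauss, d. rewrite Cantor.cancel_of_to. cbn [fst snd]. unfold zint. rewrite !Cantor.cancel_of_to. cbn [fst snd].
      unfold RtoC. replace (Nat.ltb 0 1) with true by reflexivity. apply injective_projections; simpl; field. }
    unfold theta. rewrite Tr, D1. destruct (Rle_dec _ _) as [h|h]; auto. exfalso. apply h. rewrite Cmod_1. simpl. lra. }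
  destruct (A_nonempty A _ HA (A_GG A F K0 K l1 1 HAi HF1 HK0 Hl1 (le_n 1))) as [n1 Hn1].
  assert (Hb : blk F K0 K (l1, 1%nat, n1, 0%nat) n1).
  { unfold blk. split; [exact Hl1|]. split; [lia|]. split; [exact Hn1|]. split; [rewrite D2; lia|lia]. }
  pose proof (x_pow lam F K0 K l1 1 n1 0 n1 HF HK0 ltac:(lra) Hb) as E. rewrite Ht in E.
  intros Hz. rewrite Hz in E. unfold czero in E. simpl in E.
  assert (E2 : Cmult (Cpow lam n1) (Cmult (RtoC 0) (RtoC 1)) = RtoC 0) by ring.
  rewrite E2 in E. apply RtoC_inj in E. lra.
Qed.

Definition dlt (X : seqspace) (e : R) : R :=
  match X with Lp p => powp e p / (4 * powp 2 p) | C0space => e / 4 end.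

Lemma dlt_pos X e : valid_space X -> 0 < e -> 0 < dlt X e.
Proof.
  intros HX He. destruct X as [p|]; simpl in *; [|lra].
  apply Rdiv_lt_0_compat. apply powp_gt0; auto. apply Rmult_lt_0_compat. lra. apply powp_gt0; lra.
Qed.

Lemma norm_combine X (al be w : cseq) e : valid_space X -> 0 < e ->
  (forall k, w k = Cplus (al k) (be k)) -> approxX X al (dlt X e) ->
  ex_series (fun k => Cmod (be k)) -> Series (fun k => Cmod (be k)) <= Rmin (dlt X e) 1 ->
  inX X w -> normX X w < e.
Proof.
  intros HX He Hw Hal Hbe HSb HwX.
  assert (Hb0 : forall k, 0 <= Cmod (be k)) by (intros; apply Cmod_ge_0).
  assert (Hbk : forall k, Cmod (be k) <= Rmin (dlt X e) 1).
  { intros k. eapply Rle_trans. apply (series_ge_term (fun k => Cmod (be k))); auto. auto. }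
  pose proof (dlt_pos X e HX He) as Hd.
  destruct X as [p|]; simpl in *.
  - destruct Hal as [Ha1 Ha2].
    assert (Hp2 : 0 < powp 2 p) by (apply powp_gt0; lra).
    set (bnd := fun k => powp 2 p * (powp (Cmod (al k)) p + Cmod (be k))).
    assert (Hbnd : forall k, 0 <= powp (Cmod (w k)) p <= bnd k).
    { intros k. split. apply powp_nonneg. unfold bnd. rewrite Hw.
      eapply Rle_trans. apply powp_le. split. apply Cmod_ge_0. apply Cmod_triangle. lra.
      eapply Rle_trans. apply powp_sum_le; try apply Cmod_ge_0; lra.
      apply Rmult_le_compat_l. lra. apply Rplus_le_compat_l. apply powp_le_self; auto.
      split. apply Cmod_ge_0. specialize (Hbk k). pose proof (Rmin_r (powp e p / (4 * powp 2 p)) 1). lra. }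
    assert (Hexb : ex_series bnd) by (apply exs_scal, exs_plus; auto).
    assert (HS : Series (fun k => powp (Cmod (w k)) p) <= Series bnd) by (apply Series_le; auto).
    assert (HSb2 : Series bnd = powp 2 p * (Series (fun k => powp (Cmod (al k)) p) + Series (fun k => Cmod (be k)))).
    { unfold bnd. rewrite Series_scal_l, Series_plus; auto. }
    assert (Hsm : Series bnd <= powp e p / 2).
    { rewrite HSb2. pose proof (Rmin_l (powp e p / (4 * powp 2 p)) 1).
      assert (Series (fun k => powp (Cmod (al k)) p) + Series (fun k => Cmod (be k)) <= 2 * (powp e p / (4 * powp 2 p))) by lra.
      apply Rle_trans with (powp 2 p * (2 * (powp e p / (4 * powp 2 p)))).
      apply Rmult_le_compat_l; lra. right. field. lra. }
    assert (Hep : 0 < powp e p) by (apply powp_gt0; auto).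
    rewrite <- (powp_inv e p) by lra.
    apply powp_lt. split. apply series_nonneg; auto. intros; apply powp_nonneg. lra.
    apply Rdiv_lt_0_compat; lra.
  - assert (Hk : forall k, Cmod (w k) <= e / 2).
    { intros k. rewrite Hw. eapply Rle_trans. apply Cmod_triangle. specialize (Hal k). specialize (Hbk k).
      pose proof (Rmin_l (e / 4) 1). lra. }
    eapply Rle_lt_trans. apply (sup_le_bound (fun k => Cmod (w k)) (e / 2)). auto. lra.
Qed.

Lemma hyper lam F K0 K A X y : valid_space X -> PH lam F K0 K -> furstenberg A -> finitely_invariant A ->
  (forall l m, (1 <= l)%nat -> (1 <= m)%nat -> A (F l m)) ->
  PolyB (xdef lam F K0 K) y -> y <> czero -> A_hypercyclic X A (lamB lam) y.
Proof.
  intros HX PHs HA HAi HF1 Hy Hy0. pose proof PHs as [HF [HK0 [Hr0 [HK [HKr Hr]]]]].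
  set (r := Cmod lam) in *. set (x := xdef lam F K0 K) in *.
  assert (Hx1 : forall q, Cmod (x q) <= 1) by (intros; apply x_le1; auto).
  assert (Hxs : ex_series (fun q => Cmod (x q))) by (apply (x_l1 lam F K0 K A); auto).
  destruct (PolyB_nonzero x y Hy Hy0) as [P [m [a [Cc [Hyd [Hm [Ha [HCc HP]]]]]]]].
  intros U [HUX HUo] [u0 Hu0].
  destruct (HUo u0 Hu0) as [eU [HeU Hball]].
  pose proof (HUX u0 Hu0) as Hu0X.
  assert (Hpos : forall e, 0 < r ^ e) by (intros; apply pow_lt; lra).
  set (dl := dlt X eU). assert (Hdl : 0 < dl) by (apply dlt_pos; auto).
  set (e1 := Rmin dl 1). assert (He1 : 0 < e1) by (apply Rmin_pos; lra).
  assert (Ha' : 0 < Cmod a) by (apply Cmod_gt_0; auto).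
  set (Ca := Cmod a + Cc).
  destruct (pow_unbounded r (8 * Ca * r ^ (m * m) / e1) 1 Hr) as [M [HM1 HM2]].
  destruct (density X r u0 a dl M HX Hr Hu0X Ha Hdl) as [l [HlM Happ]].
  assert (Hl : (1 <= l)%nat) by lia.
  set (s := lvl_s l). set (L := lvl_S l).
  set (eta := e1 / (2 * (INR L + 1) * (Cc + 1) * r ^ s)).
  assert (HL0 : 0 <= INR L) by apply pos_INR.
  assert (Heta : 0 < eta) by (unfold eta; apply Rdiv_lt_0_compat; auto; repeat apply Rmult_lt_0_compat; auto; lra).
  destruct (pow_unbounded r (r ^ s / eta ^ m) 0 Hr) as [N0 [_ HN0]].
  apply (proj2 (proj2 HA) (fun n => GG F K0 K l m n /\ (N0 < n)%nat)).
  { apply HAi. apply A_GG; auto. }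
  intros n [HG HnN].
  set (T := Nat.iter n (lamB lam) y).
  assert (HT : forall k, T k = Cmult (Cpow lam n) (P (x (n + k)%nat))).
  { intros k. unfold T. rewrite iter_lamB, Hyd. reflexivity. }
  assert (HPb : forall q, Cmod (P (x q)) <= Ca * Cmod (x q) ^ m) by (intros; apply HP; auto).
  assert (Hxm : forall q, Cmod (x q) ^ m <= Cmod (x q)).
  { intros q. rewrite <- (pow_1 (Cmod (x q))) at 2. apply pow_le_exp_dec. split; [apply Cmod_ge_0|auto]. lia. }
  assert (HTX : inX X T).
  { apply (inX_dom X T (fun k => Cmod (x (n + k)%nat)) (r ^ n * Ca)); auto.
    apply Rmult_le_pos. left; auto. unfold Ca; pose proof (Cmod_ge_0 a); lra.
    intros k. rewrite HT, Cmod_mult, Cmod_pow. fold r. rewrite Rmult_assoc. apply Rmult_le_compat_l. left; auto.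
    eapply Rle_trans. apply HPb. apply Rmult_le_compat_l. unfold Ca; pose proof (Cmod_ge_0 a); lra. auto.
    intros k. split. apply Cmod_ge_0. auto.
    apply (ex_series_incr_n (fun q => Cmod (x q)) n). exact Hxs. }
  set (be := fun k => Cminus (T k) (Cmult a (theta r l k))).
  set (al := fun k => Cminus (Cmult a (theta r l k)) (u0 k)).
  assert (Hbe : forall k, Cmod (be k) <= (if Nat.ltb k L then Cc * r ^ s * eta else 0) +
                     Ca * (if Nat.leb L k then r ^ n * Cmod (x (n + k)%nat) ^ m else 0)).
  { intros k. unfold be. destruct (Nat.ltb_spec k L), (Nat.leb_spec L k); try lia.
    - assert (Hb : blk F K0 K (l, m, n, k) (n + k)) by (unfold blk; split; [exact Hl|]; split; [exact Hm|]; split; [exact HG|]; split; [exact H|reflexivity]).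
      pose proof (x_pow lam F K0 K l m n k (n + k) HF HK0 (Rlt_trans _ _ _ Rlt_0_1 Hr) Hb) as Ex. fold x r in Ex.
      assert (Eb : Cminus (T k) (Cmult a (theta r l k)) = Cmult (Cpow lam n) (Cminus (P (x (n + k)%nat)) (Cmult a (Cpow (x (n + k)%nat) m)))).
      { rewrite HT, <- Ex. ring. }
      rewrite Eb, Cmod_mult, Cmod_pow. fold r.
      destruct (HP (x (n + k)%nat) (Hx1 _)) as [HP1 _].
      pose proof (x_mod lam F K0 K l m n k (n + k) HF HK0 Hr Hb) as Hxmod. fold x r s in Hxmod.
      assert (Hxe : Cmod (x (n + k)%nat) <= eta).
      { apply (pow_le_base _ _ m). lia. apply Cmod_ge_0. lra.
        assert (Cmod (x (n + k)%nat) ^ m <= r ^ s / r ^ n).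
        { apply (Rmult_le_reg_l (r ^ n)); auto. unfold Rdiv. rewrite <- Rmult_assoc, (Rmult_comm (r ^ n) (r ^ s)), Rmult_assoc, Rinv_r, Rmult_1_r by (apply Rgt_not_eq, Hpos). lra. }
        assert (r ^ s / r ^ n <= eta ^ m).
        { assert (r ^ N0 <= r ^ n) by (apply Rle_pow; lra || lia).
          assert (Hem : 0 < eta ^ m) by (apply pow_lt; lra).
          unfold Rdiv in *. apply (Rmult_le_reg_r (r ^ n)); auto. rewrite Rmult_assoc, Rinv_l, Rmult_1_r by (apply Rgt_not_eq, Hpos).
          apply (Rmult_le_reg_r (/ eta ^ m)). apply Rinv_0_lt_compat; auto.
          rewrite (Rmult_comm (eta ^ m)), Rmult_assoc, Rinv_r, Rmult_1_r by lra. nra. }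
        lra. }
      eapply Rle_trans. apply Rmult_le_compat_l. left; auto. exact HP1.
      assert (E3 : r ^ n * (Cc * Cmod (x (n + k)%nat) ^ S m) = Cc * (r ^ n * Cmod (x (n + k)%nat) ^ m) * Cmod (x (n + k)%nat)) by (simpl; ring).
      rewrite E3. assert (0 <= Ca * 0) by (unfold Ca; pose proof (Cmod_ge_0 a); lra). rewrite Rmult_0_r, Rplus_0_r.
      assert (0 <= r ^ n * Cmod (x (n + k)%nat) ^ m) by (apply Rmult_le_pos; [left; auto|apply pow_le, Cmod_ge_0]).
      apply Rmult_le_compat. apply Rmult_le_pos; lra. apply Cmod_ge_0. apply Rmult_le_compat_l; lra. exact Hxe.
    - rewrite theta_supp by auto. rewrite Rplus_0_l.
      replace (Cminus (T k) (Cmult a (RtoC 0))) with (T k) by ring. rewrite HT, Cmod_mult, Cmod_pow. fold r.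
      eapply Rle_trans. apply Rmult_le_compat_l. left; auto. apply HPb. right; ring. }
  assert (HbeS : ex_series (fun k => Cmod (be k)) /\ Series (fun k => Cmod (be k)) <= e1).
  { apply series_le_bound. intros; apply Cmod_ge_0.
    intros Q. rewrite sum_n_rsum. eapply Rle_trans. apply rsum_le. intros j _. apply Hbe.
    rewrite rsum_plus, rsum_ind_eq, rsum_scal_l.
    pose proof (KL lam F K0 K l m n (S Q) PHs Hl Hm HG) as HKL. fold r x L in HKL.
    assert (Q1 : INR (Nat.min (S Q) L) * (Cc * r ^ s * eta) <= e1 / 2).
    { assert (INR (Nat.min (S Q) L) <= INR L) by (apply le_INR; lia).
      assert (0 <= Cc * r ^ s * eta) by (apply Rmult_le_pos; [apply Rmult_le_pos; [lra|left; auto]|lra]).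
      apply Rle_trans with (INR L * (Cc * r ^ s * eta)). apply Rmult_le_compat_r; auto.
      assert (Nr : r ^ s <> 0) by (apply Rgt_not_eq, Hpos).
      assert (Nc : Cc + 1 <> 0) by lra. assert (NL : INR L + 1 <> 0) by lra.
      unfold eta. replace (INR L * (Cc * r ^ s * (e1 / (2 * (INR L + 1) * (Cc + 1) * r ^ s))))
        with ((INR L / (INR L + 1)) * (Cc / (Cc + 1)) * (e1 / 2)) by (field; repeat split; auto).
      assert (0 <= INR L / (INR L + 1) <= 1). { split. apply Rdiv_le_0_compat; lra. apply Rmult_le_reg_r with (INR L + 1). lra. unfold Rdiv. rewrite Rmult_assoc, Rinv_l by lra. lra. }
      assert (0 <= Cc / (Cc + 1) <= 1). { split. apply Rdiv_le_0_compat; lra. apply Rmult_le_reg_r with (Cc + 1). lra. unfold Rdiv. rewrite Rmult_assoc, Rinv_l by lra. lra. }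
      assert (0 < e1 / 2) by lra.
      assert (INR L / (INR L + 1) * (Cc / (Cc + 1)) <= 1) by nra. nra. }
    assert (Q2 : Ca * (4 * (r ^ (m * m) * / r ^ hh K0 K l m)) <= e1 / 2).
    { assert (Hhh : r ^ M <= r ^ hh K0 K l m) by (apply Rle_pow; [lra|pose proof (hh_ge K0 K l m HK0); lia]).
      assert (HCa : 0 <= Ca) by (unfold Ca; lra).
      assert (8 * Ca * r ^ (m * m) / e1 <= r ^ hh K0 K l m) by lra.
      assert (Hhp := Hpos (hh K0 K l m)).
      unfold Rdiv in H. apply (Rmult_le_compat_r e1) in H; [|lra].
      rewrite Rmult_assoc, Rinv_l, Rmult_1_r in H by lra.
      apply (Rmult_le_reg_r (r ^ hh K0 K l m)); auto.
      replace (Ca * (4 * (r ^ (m * m) * / r ^ hh K0 K l m)) * r ^ hh K0 K l m) with (4 * Ca * r ^ (m * m)) by (field; apply Rgt_not_eq; auto).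
      nra. }
    assert (Ca * rsum (fun k => if Nat.leb L k then r ^ n * Cmod (x (n + k)%nat) ^ m else 0) (S Q) <=
            Ca * (4 * (r ^ (m * m) * / r ^ hh K0 K l m))) by (apply Rmult_le_compat_l; [unfold Ca; lra|exact HKL]).
    lra. }
  destruct HbeS as [HbeS1 HbeS2].
  apply Hball. exact HTX.
  apply (norm_combine X al be (csub T u0) eU HX HeU); auto.
  - intros k. unfold csub, al, be. ring.
  - apply inX_sub; auto.
Qed.

Lemma sufficiency X A lam : valid_space X -> furstenberg A -> finitely_invariant A -> 1 < Cmod lam ->
   (exists F : nat -> nat -> (nat -> Prop),
      (forall l m, (1 <= l)%nat -> (1 <= m)%nat -> A (F l m)) /\
      (forall l m l' m', (1 <= l)%nat -> (1 <= m)%nat -> (1 <= l')%nat ->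
         (1 <= m')%nat -> (l, m) <> (l', m') ->
         forall n, ~ (F l m n /\ F l' m' n)) /\
      (forall l m l' m' n n', (1 <= l)%nat -> (1 <= m)%nat -> (1 <= l')%nat ->
         (1 <= m')%nat -> F l m n -> F l' m' n' -> (n' > n)%nat ->
         (n' >= n + l)%nat /\
         INR n' * INR m / INR m' >= INR (n + l + l'))) ->
  (exists B : cseq -> Prop,
      subalgebra X B /\ (exists x, B x /\ x <> czero) /\
      (forall x, B x -> x <> czero -> A_hypercyclic X A (lamB lam) x)).
Proof.
  intros HX HA HAi Hr [F [HF1 [HF2 HF3]]].
  assert (HF : Fprops F) by (split; auto).
  destruct (PH_exists lam F HF Hr) as [K0 [K PHs]].
  pose proof PHs as [_ [HK0 _]].
  exists (PolyB (xdef lam F K0 K)). split; [|split].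
  - apply PolyB_sub; auto. intros; apply x_le1; auto. apply (x_l1 lam F K0 K A); auto.
  - exists (xdef lam F K0 K). split. apply PolyB_x. apply (x_nonzero lam F K0 K A); auto.
  - intros y Hy Hy0. apply (hyper lam F K0 K A X y); auto.
Qed.

Theorem theorem2p4 (X : seqspace) (A : (nat -> Prop) -> Prop) (lam : C) :
  valid_space X -> furstenberg A -> finitely_invariant A -> 1 < Cmod lam ->
  ((exists B : cseq -> Prop,
      subalgebra X B /\ (exists x, B x /\ x <> czero) /\
      (forall x, B x -> x <> czero -> A_hypercyclic X A (lamB lam) x))
   <->
   (exists F : nat -> nat -> (nat -> Prop),
      (forall l m, (1 <= l)%nat -> (1 <= m)%nat -> A (F l m)) /\
      (forall l m l' m', (1 <= l)%nat -> (1 <= m)%nat -> (1 <= l')%nat ->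
         (1 <= m')%nat -> (l, m) <> (l', m') ->
         forall n, ~ (F l m n /\ F l' m' n)) /\
      (forall l m l' m' n n', (1 <= l)%nat -> (1 <= m)%nat -> (1 <= l')%nat ->
         (1 <= m')%nat -> F l m n -> F l' m' n' -> (n' > n)%nat ->
         (n' >= n + l)%nat /\
         INR n' * INR m / INR m' >= INR (n + l + l')))).
Proof.
  intros HX HA HAi Hr. split.
  - apply necessity; auto.
  - apply sufficiency; auto.
Qed.
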